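(* Let $\mathcal W,\mathcal U,\mathcal V$ be finite, $\Phi_W$ and $\Phi_{U|W}$ codebook distributions and $\Phi_{V|W,U}$ a memoryless channel. Let $\mathcal B_1^{(n)}=\{w^n(j)\}_{j\in[2^{nR_1}]}$ have independent entries drawn from $\prod\Phi_W$, and $\mathcal B_2^{(n)}=\{u^n(w^n,k): w^n\in\mathcal B_1^{(n)},k\in[2^{nR_2}]\}$ independent entries with $u^n(w^n,k)\sim\prod_t\Phi_{U|W}(\cdot|w_t)$. With $J$ uniform on $[2^{nR_1}]$ and $K$ uniform on $[2^{nR_2}]$ independent, set $W^n=w^n(J)$, $U^n=u^n(W^n,K)$, and let $V^n$ be the output of $\prod\Phi_{V|W,U}$ on $(W^n,U^n)$, with distribution $P_{V^n}$; let $Q_{V^n}=\prod\Phi_V$ with $\Phi_V=\sum_{w,u}\Phi_W\Phi_{U|W}\Phi_{V|W,U}$. If $R_1>I(W;V)$, $R_2>I(W,U;V)-H(W)$ and $R_1+R_2>I(W,U;V)$, then $\lim_{n\to\infty}\mathbf E\|P_{V^n}-Q_{V^n}\|_{TV}=0$, with exponentially fast convergence in $n$.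
   Context: Information quantities in bits under $\Phi_W\Phi_{U|W}\Phi_{V|W,U}$; expectation over both random codebooks; total variation is half the $\ell_1$ distance. *)

(* Defs.v *)
From mathcomp Require Import all_boot.
From Stdlib Require Import Reals.
Set Implicit Arguments. Unset Strict Implicit. Unset Printing Implicit Defensive.
Open Scope R_scope.

Definition rsum (T : finType) (f : T -> R) : R := \big[Rplus/0]_(x : T) f x.
Definition rprod (T : finType) (f : T -> R) : R := \big[Rmult/1]_(x : T) f x.

Definition log2 (x : R) : R := ln x / ln 2.

Definition is_pmf (T : finType) (p : T -> R) : Prop :=
  (forall x, 0 <= p x) /\ rsum p = 1.

(* codebook size [2^{nR}] = {1,...,max(1, floor(2^{nR}))} *)
Definition cb_size (n : nat) (Rt : R) : nat :=
  Nat.max 1 (Z.to_nat (Int_part (Rpower 2 (INR n * Rt)))).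

Definition xlogr (x y : R) : R :=
  if Req_EM_T x 0 then 0 else x * log2 (x / y).

Section Info.
Variables (W U V : finType) (PhiW : W -> R) (PhiUW : W -> U -> R)
          (PhiVWU : W -> U -> V -> R).

Definition pWUV (w : W) (u : U) (v : V) : R := PhiW w * PhiUW w u * PhiVWU w u v.
Definition pWU (w : W) (u : U) : R := PhiW w * PhiUW w u.
Definition pWV (w : W) (v : V) : R := rsum (fun u => pWUV w u v).
Definition PhiV (v : V) : R := rsum (fun w => rsum (fun u => pWUV w u v)).

Definition entW : R := - rsum (fun w => xlogr (PhiW w) 1).
Definition mi_W_V : R :=
  rsum (fun w => rsum (fun v => xlogr (pWV w v) (PhiW w * PhiV v))).
Definition mi_WU_V : R :=
  rsum (fun w => rsum (fun u => rsum (fun v =>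
     xlogr (pWUV w u v) (pWU w u * PhiV v)))).

Section Code.
Variables (n M1 M2 : nat).
Notation seqW := {ffun 'I_n -> W}.
Notation seqU := {ffun 'I_n -> U}.
Notation seqV := {ffun 'I_n -> V}.
(* B1 = {w^n(j)}_j ; B2 = {u^n(w^n,k)} indexed by sequences w^n and k
   (only the entries at w^n in B1 are used) *)
Definition Cb1 := {ffun 'I_M1 -> seqW}.
Definition Cb2 := {ffun seqW -> {ffun 'I_M2 -> seqU}}.

Definition probB1 (B1 : Cb1) : R :=
  rprod (fun j => rprod (fun t => PhiW (B1 j t))).
Definition probB2 (B2 : Cb2) : R :=
  rprod (fun wn : seqW => rprod (fun k => rprod (fun t => PhiUW (wn t) (B2 wn k t)))).

Definition PVn (B1 : Cb1) (B2 : Cb2) (v : seqV) : R :=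
  / INR (M1 * M2) * rsum (fun j => rsum (fun k =>
     rprod (fun t => PhiVWU (B1 j t) (B2 (B1 j) k t) (v t)))).
Definition QVn (v : seqV) : R := rprod (fun t => PhiV (v t)).

Definition tv (B1 : Cb1) (B2 : Cb2) : R :=
  / 2 * rsum (fun v : seqV => Rabs (PVn B1 B2 v - QVn v)).

Definition expected_tv : R :=
  rsum (fun B1 : Cb1 => rsum (fun B2 : Cb2 => probB1 B1 * probB2 B2 * tv B1 B2)).
End Code.
End Info.

(* Main.v *)
From HB Require Import structures.
Require Import Defs.
From mathcomp Require Import all_boot.
From Stdlib Require Import Reals Lra Classical ZArith.
Set Implicit Arguments. Unset Strict Implicit. Unset Printing Implicit Defensive.
Open Scope R_scope.

HB.instance Definition _ := Monoid.isComLaw.Build R 0 Rplus (fun x y z => esym (Rplus_assoc x y z)) Rplus_comm Rplus_0_l.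
HB.instance Definition _ := Monoid.isComLaw.Build R 1 Rmult (fun x y z => esym (Rmult_assoc x y z)) Rmult_comm Rmult_1_l.
HB.instance Definition _ := Monoid.isMulLaw.Build R 0 Rmult Rmult_0_l Rmult_0_r.
HB.instance Definition _ := Monoid.isAddLaw.Build R Rmult Rplus Rmult_plus_distr_r Rmult_plus_distr_l.

Section Sums.
Variable T : finType.
Implicit Types f g : T -> R.

Lemma rsum_ext f g : (forall x, f x = g x) -> rsum f = rsum g.
Proof. by move=> H; rewrite /rsum; apply: eq_bigr => x _; apply: H. Qed.

Lemma rprod_ext f g : (forall x, f x = g x) -> rprod f = rprod g.
Proof. by move=> H; rewrite /rprod; apply: eq_bigr => x _; apply: H. Qed.

Lemma rsum_le f g : (forall x, f x <= g x) -> rsum f <= rsum g.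
Proof.
move=> H; rewrite /rsum; apply: (big_ind2 (fun a b => a <= b)) => //.
- lra.
- by move=> ????; apply: Rplus_le_compat.
Qed.

Lemma rsum_ge0 f : (forall x, 0 <= f x) -> 0 <= rsum f.
Proof.
move=> H; rewrite /rsum; apply: (big_ind (fun a => 0 <= a)) => //.
- lra.
- by move=> ???; lra.
Qed.

Lemma rsum_plus f g : rsum (fun x => f x + g x) = rsum f + rsum g.
Proof. exact: big_split. Qed.

Lemma rsum_scal c f : rsum (fun x => c * f x) = c * rsum f.
Proof. by rewrite /rsum big_distrr. Qed.

Lemma rsum_scalr c f : rsum (fun x => f x * c) = rsum f * c.
Proof. by rewrite /rsum big_distrl. Qed.

Lemma rsum0 : rsum (fun _ : T => 0) = 0.
Proof. by rewrite /rsum big1. Qed.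

Lemma rsum_opp f : rsum (fun x => - f x) = - rsum f.
Proof.
have -> : rsum (fun x => - f x) = rsum (fun x => (-1) * f x) by apply: rsum_ext => x; ring.
rewrite rsum_scal; ring.
Qed.

Lemma rsum_minus f g : rsum (fun x => f x - g x) = rsum f - rsum g.
Proof. by rewrite /Rminus rsum_plus rsum_opp. Qed.

Lemma rsum_abs f : Rabs (rsum f) <= rsum (fun x => Rabs (f x)).
Proof.
rewrite /rsum; apply: (big_ind2 (fun a b => Rabs a <= b)).
- rewrite Rabs_R0; lra.
- move=> a b c d H1 H2; apply: Rle_trans (Rabs_triang _ _) _; lra.
- by move=> x _; lra.
Qed.

Lemma rsum_pred1 (a : T) f : rsum (fun x => if x == a then f x else 0) = f a.
Proof.
rewrite /rsum (bigD1 a) //= eqxx big1 ?Rplus_0_r // => x /negbTE ->; done.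
Qed.

Lemma rsum_pred1' (a : T) f : rsum (fun x => if a == x then f x else 0) = f a.
Proof. rewrite -(rsum_pred1 a); apply: rsum_ext => x; by rewrite eq_sym. Qed.

Lemma rsum_term f (a : T) : (forall x, 0 <= f x) -> f a <= rsum f.
Proof.
move=> H; rewrite /rsum (bigD1 a) //=.
have : 0 <= \big[Rplus/0]_(i | i != a) f i.
  apply: (big_ind (fun a => 0 <= a)) => //; [lra| move=> ???; lra].
lra.
Qed.

Lemma rprod_ge0 f : (forall x, 0 <= f x) -> 0 <= rprod f.
Proof.
move=> H; rewrite /rprod; apply: (big_ind (fun a => 0 <= a)) => //.
- lra.
- by move=> ???; apply: Rmult_le_pos.
Qed.

Lemma rprod_gt0 f : (forall x, 0 < f x) -> 0 < rprod f.
Proof.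
move=> H; rewrite /rprod; apply: (big_ind (fun a => 0 < a)) => //.
- lra.
- by move=> ???; apply: Rmult_lt_0_compat.
Qed.

Lemma rprod_mult f g : rprod (fun x => f x * g x) = rprod f * rprod g.
Proof. exact: big_split. Qed.

Lemma rprod_eq0 f (a : T) : f a = 0 -> rprod f = 0.
Proof. by move=> H; rewrite /rprod (bigD1 a) //= H Rmult_0_l. Qed.

Lemma rprod1 : rprod (fun _ : T => 1) = 1.
Proof. by rewrite /rprod big1. Qed.

Lemma rsum_swap (T' : finType) (F : T -> T' -> R) :
  rsum (fun x => rsum (fun y => F x y)) = rsum (fun y => rsum (fun x => F x y)).
Proof. exact: exchange_big. Qed.

End Sums.

Lemma rprod_exp (T : finType) (f : T -> R) : rprod (fun x => exp (f x)) = exp (rsum f).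
Proof.
rewrite /rprod /rsum; apply: (big_ind2 (fun a b => a = exp b)).
- by rewrite exp_0.
- by move=> a b c d -> ->; rewrite exp_plus.
- done.
Qed.

Lemma rprod_const_ord n c : rprod (fun _ : 'I_n => c) = c ^ n.
Proof.
rewrite /rprod big_const_ord; elim: n => //= n ->; done.
Qed.

Lemma prod_sum (I J : finType) (F : I -> J -> R) :
  rsum (fun f : {ffun I -> J} => rprod (fun i => F i (f i))) = rprod (fun i => rsum (F i)).
Proof. rewrite /rprod /rsum; symmetry; exact: bigA_distr_bigA. Qed.

Section PF.
Variables (I T : finType) (p : I -> T -> R).

Lemma PF (h : I -> T -> R) :
  rsum (fun B : {ffun I -> T} => rprod (fun i => p i (B i)) * rprod (fun i => h i (B i)))
  = rprod (fun i => rsum (fun x => p i x * h i x)).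
Proof.
rewrite -prod_sum; apply: rsum_ext => B; by rewrite rprod_mult.
Qed.

Hypothesis hp : forall i, rsum (p i) = 1.

Lemma rprod_single (a : I) (F : I -> R) : (forall i, i != a -> F i = 1) -> rprod F = F a.
Proof.
move=> H; rewrite /rprod (bigD1 a) //= big1 ?Rmult_1_r //.
Qed.

Lemma marg0 : rsum (fun B : {ffun I -> T} => rprod (fun i => p i (B i))) = 1.
Proof.
transitivity (rsum (fun B : {ffun I -> T} => rprod (fun i => p i (B i)) * rprod (fun i => (fun _ _ => 1) i (B i)))).
  by apply: rsum_ext => B; rewrite rprod1 Rmult_1_r.
rewrite (PF (fun _ _ => 1)) /rprod big1 // => i _.
by transitivity (rsum (p i)); [apply: rsum_ext => x; ring| exact: hp].
Qed.

Lemma marg1 (a : I) (f : T -> R) :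
  rsum (fun B : {ffun I -> T} => rprod (fun i => p i (B i)) * f (B a))
  = rsum (fun x => p a x * f x).
Proof.
have := PF (fun i x => if i == a then f x else 1).
rewrite (@rprod_single a); last first.
  move=> i /negbTE ->; transitivity (rsum (p i)); [apply: rsum_ext => x; ring| exact: hp].
rewrite eqxx => <-; apply: rsum_ext => B; congr (_ * _).
by rewrite (@rprod_single a) ?eqxx // => i /negbTE ->.
Qed.

Lemma marg2 (a b : I) (f g : T -> R) : a != b ->
  rsum (fun B : {ffun I -> T} => rprod (fun i => p i (B i)) * (f (B a) * g (B b)))
  = rsum (fun x => p a x * f x) * rsum (fun x => p b x * g x).
Proof.
move=> ab.
have := PF (fun i x => (if i == a then f x else 1) * (if i == b then g x else 1)).
have Hr : forall F : I -> R, (forall i, i != a -> i != b -> F i = 1) -> rprod F = F a * F b.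
  move=> F HF; rewrite /rprod (bigD1 a) // (bigD1 b) /=; last by rewrite eq_sym.
  rewrite big1 ?Rmult_1_r ?Rmult_assoc // => i /andP [ib ia]; exact: HF.
rewrite Hr; last first.
  move=> i /negbTE -> /negbTE ->; transitivity (rsum (p i)); [apply: rsum_ext => x; ring| exact: hp].
rewrite eqxx (negbTE ab) eq_sym (negbTE ab) eqxx => H.
transitivity (rsum (fun x => p a x * (f x * 1)) * rsum (fun x => p b x * (1 * g x))); last first.
  by congr (_ * _); apply: rsum_ext => x; ring.
rewrite -H; apply: rsum_ext => B; congr (_ * _).
rewrite Hr ?eqxx ?(negbTE ab) // 1?eq_sym ?(negbTE ab); first ring.
by move=> i /negbTE -> /negbTE ->; ring.
Qed.
End PF.

Lemma rsum_sq (J : finType) (f : J -> R) :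
  (rsum f) ^ 2 = rsum (fun j => rsum (fun j' => f j * f j')).
Proof.
rewrite /= Rmult_1_r /rsum big_distrlr //.
Qed.

Lemma var_map (I T J : finType) (p : I -> T -> R) (hp : forall i, rsum (p i) = 1)
  (Y : I -> T -> R) (hY : forall i, rsum (fun x => p i x * Y i x) = 0) (a : J -> I) :
  rsum (fun B : {ffun I -> T} => rprod (fun i => p i (B i)) *
           (rsum (fun j => Y (a j) (B (a j)))) ^ 2)
  = rsum (fun j => rsum (fun j' => if a j == a j'
             then rsum (fun x => p (a j) x * Y (a j) x ^ 2) else 0)).
Proof.
transitivity (rsum (fun j => rsum (fun j' => rsum (fun B : {ffun I -> T} =>
   rprod (fun i => p i (B i)) * (Y (a j) (B (a j)) * Y (a j') (B (a j'))))))).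
  transitivity (rsum (fun B : {ffun I -> T} => rsum (fun j => rsum (fun j' =>
   rprod (fun i => p i (B i)) * (Y (a j) (B (a j)) * Y (a j') (B (a j'))))))).
    apply: rsum_ext => B; rewrite rsum_sq -rsum_scal. refine (rsum_ext _) => j.
    by rewrite -rsum_scal.
  rewrite [LHS]rsum_swap; apply: rsum_ext => j; by rewrite [LHS]rsum_swap.
apply: rsum_ext => j; apply: rsum_ext => j'.
case: eqP => [e|ne].
  rewrite -e (marg1 hp (a j) (fun x => Y (a j) x * Y (a j) x)).
  by apply: rsum_ext => x; rewrite /= Rmult_1_r.
rewrite (marg2 hp) ?hY ?Rmult_0_l //; by apply/eqP.
Qed.

Lemma cauchy (T : finType) (p f : T -> R) : (forall x, 0 <= p x) -> rsum p = 1 ->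
  rsum (fun x => p x * f x) <= sqrt (rsum (fun x => p x * f x ^ 2)).
Proof.
move=> hp0 hp1; set m := rsum (fun x => p x * f x).
have H : 0 <= rsum (fun x => p x * (f x - m) ^ 2).
  apply: rsum_ge0 => x; apply: Rmult_le_pos => //; apply: pow2_ge_0.
have E : rsum (fun x => p x * (f x - m) ^ 2) =
   rsum (fun x => p x * f x ^ 2) - 2 * m * m + m * m * rsum p.
  transitivity (rsum (fun x => p x * f x ^2 + (-2*m) * (p x * f x) + (m*m) * p x)).
    by apply: rsum_ext => x; ring.
  rewrite !rsum_plus !rsum_scal -/m; ring.
rewrite hp1 in E.
have H2 : m ^ 2 <= rsum (fun x => p x * f x ^ 2) by nra.
case: (Rle_lt_dec m 0) => hm.
  apply: Rle_trans hm (sqrt_pos _).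
rewrite -(sqrt_pow2 m); last lra.
by apply: sqrt_le_1_alt.
Qed.

Lemma cs_abs (T : finType) (p f : T -> R) : (forall x, 0 <= p x) -> rsum p = 1 ->
  rsum (fun x => p x * Rabs (f x)) <= sqrt (rsum (fun x => p x * f x ^ 2)).
Proof.
move=> h1 h2; apply: Rle_trans (cauchy (fun x => Rabs (f x)) h1 h2) _.
right; congr sqrt; apply: rsum_ext => x; by rewrite pow2_abs.
Qed.

Lemma center0 (T : finType) (p f : T -> R) : rsum p = 1 ->
  rsum (fun x => p x * (f x - rsum (fun y => p y * f y))) = 0.
Proof.
move=> h; set m := rsum (fun y => p y * f y).
transitivity (rsum (fun x => p x * f x) + (- m) * rsum p).
  rewrite -rsum_scal -rsum_plus; apply: rsum_ext => x; ring.
rewrite h -/m; ring.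
Qed.

Lemma var_le (T : finType) (p f : T -> R) : rsum p = 1 ->
  rsum (fun x => p x * (f x - rsum (fun y => p y * f y)) ^ 2) <= rsum (fun x => p x * f x ^ 2).
Proof.
move=> h; set m := rsum (fun y => p y * f y).
have -> : rsum (fun x => p x * (f x - m) ^ 2) =
   rsum (fun x => p x * f x ^ 2) - 2 * m * m + m * m * rsum p.
  transitivity (rsum (fun x => p x * f x ^2 + (-2*m) * (p x * f x) + (m*m) * p x)).
    by apply: rsum_ext => x; ring.
  rewrite !rsum_plus !rsum_scal -/m; ring.
rewrite h; nra.
Qed.

Lemma rsum_const' (I : finType) c : rsum (fun _ : I => c) = INR #|I| * c.
Proof.
rewrite /rsum big_const; elim: #|I| => [|k IH] /=; first ring.
rewrite IH; case: k {IH} => [|k] /=; ring.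
Qed.

Lemma var_iid (I T : finType) (p f : T -> R) : rsum p = 1 ->
  rsum (fun B : {ffun I -> T} => rprod (fun i => p (B i)) *
     (rsum (fun i => f (B i) - rsum (fun y => p y * f y))) ^ 2)
  <= INR #|I| * rsum (fun x => p x * f x ^ 2).
Proof.
move=> h; set m := rsum (fun y => p y * f y).
have := @var_map I T I (fun _ => p) (fun _ => h) (fun _ x => f x - m) (fun _ => center0 f h) (fun i : I => i).
rewrite /= => ->.
rewrite (rsum_ext (g := fun _ => rsum (fun x => p x * (f x - m) ^ 2))); last first.
  by move=> j; rewrite (rsum_pred1' j (fun _ => rsum (fun x => p x * (f x - m) ^ 2))).
rewrite rsum_const'.
apply: Rmult_le_compat_l; first exact: pos_INR.
exact: var_le.
Qed.

Lemma pair_bound (I T : finType) (p h : T -> R) : (forall x, 0 <= p x) -> rsum p = 1 ->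
  (forall x, 0 <= h x) ->
  rsum (fun B : {ffun I -> T} => rprod (fun i => p (B i)) *
     rsum (fun j => rsum (fun j' => if B j == B j' then h (B j) else 0)))
  <= INR #|I| * rsum (fun x => p x * h x) + INR #|I| * INR #|I| * rsum (fun x => p x * p x * h x).
Proof.
move=> hp0 hp1 hh.
set A := rsum (fun x => p x * h x); set Bq := rsum (fun x => p x * p x * h x).
have hBq : 0 <= Bq.
  apply: rsum_ge0 => x; apply: Rmult_le_pos => //; exact: Rmult_le_pos.
transitivity (rsum (fun j : I => rsum (fun j' : I => rsum (fun B : {ffun I -> T} =>
   rprod (fun i => p (B i)) * (if B j == B j' then h (B j) else 0))))).
  right; transitivity (rsum (fun B : {ffun I -> T} => rsum (fun j => rsum (fun j' =>
     rprod (fun i => p (B i)) * (if B j == B j' then h (B j) else 0))))).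
    apply: rsum_ext => B; rewrite -rsum_scal; apply: rsum_ext => j; by rewrite -rsum_scal.
  rewrite [LHS]rsum_swap; apply: rsum_ext => j; by rewrite [LHS]rsum_swap.
have hp1' : forall i : I, rsum ((fun _ => p) i) = 1 by [].
apply: Rle_trans (rsum_le (g := fun j => A + INR #|I| * Bq) _) _; last first.
  by rewrite rsum_const'; right; ring.
move=> j.
apply: Rle_trans (rsum_le (g := fun j' => (if j == j' then A else 0) + Bq) _) _; last first.
  by rewrite rsum_plus rsum_pred1' rsum_const'; right.
move=> j'; case: eqP => [<-|ne].
  rewrite (rsum_ext (g := fun B : {ffun I -> T} => rprod (fun i => p (B i)) * h (B j))); last first.
    by move=> B; rewrite eqxx.
  rewrite (marg1 hp1' j h) -/A; lra.
rewrite Rplus_0_l.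
rewrite (rsum_ext (g := fun B : {ffun I -> T} => rsum (fun x =>
   rprod (fun i => p (B i)) * ((if B j == x then 1 else 0) * ((if B j' == x then 1 else 0) * h x))))); last first.
  move=> B; rewrite rsum_scal; congr (_ * _).
  rewrite (rsum_ext (g := fun x => if B j == x then (if B j' == x then 1 else 0) * h x else 0)); last first.
    by move=> x; case: eqP => _; ring.
  rewrite (rsum_pred1' (B j) (fun x => (if B j' == x then 1 else 0) * h x)).
  case: (eqVneq (B j) (B j')) => [e|ne2]; ring.
rewrite rsum_swap; right; apply: rsum_ext => x.
have ne' : j != j' by apply/eqP.
have := @marg2 I T (fun _ => p) hp1' j j' (fun y => if y == x then 1 else 0) (fun y => (if y == x then 1 else 0) * h x). move=> /(_ ne') /= ->.
rewrite (rsum_ext (g := fun y => if y == x then p y else 0)); last by move=> y; case: eqP => _; ring.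
rewrite (rsum_ext (f := fun x0 => p x0 * ((if x0 == x then 1 else 0) * h x)) (g := fun y => if y == x then p y * h x else 0)); last by move=> y; case: eqP => _; ring.
rewrite (rsum_pred1 x p) (rsum_pred1 x (fun y => p y * h x)).
ring.
Qed.

Lemma lin_swap (A J L : finType) (p : A -> R) (c c' : R) (f : A -> J -> L -> R) :
  rsum (fun a => p a * (c * rsum (fun j => c' * rsum (fun k => f a j k))))
  = c * rsum (fun j => c' * rsum (fun k => rsum (fun a => p a * f a j k))).
Proof.
have eL : forall a, p a * (c * rsum (fun j => c' * rsum (fun k => f a j k))) =
   rsum (fun j => rsum (fun k => c * (c' * (p a * f a j k)))).
  move=> a; rewrite -rsum_scal -rsum_scal; apply: rsum_ext => j.
  rewrite -!rsum_scal; apply: rsum_ext => k; ring.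
have eR : c * rsum (fun j => c' * rsum (fun k => rsum (fun a => p a * f a j k))) =
   rsum (fun j => rsum (fun k => rsum (fun a => c * (c' * (p a * f a j k))))).
  rewrite -rsum_scal; apply: rsum_ext => j.
  rewrite -!rsum_scal; apply: rsum_ext => k; rewrite -!rsum_scal; apply: rsum_ext => a; ring.
rewrite (rsum_ext eL) eR rsum_swap; apply: rsum_ext => j; by rewrite rsum_swap.
Qed.

Lemma lin_swap1 (A J : finType) (p : A -> R) (c : R) (f : A -> J -> R) :
  rsum (fun a => p a * (c * rsum (fun j => f a j)))
  = c * rsum (fun j => rsum (fun a => p a * f a j)).
Proof.
have eL : forall a, p a * (c * rsum (fun j => f a j)) = rsum (fun j => c * (p a * f a j)).
  move=> a; rewrite -rsum_scal -rsum_scal; apply: rsum_ext => j; ring.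
have eR : c * rsum (fun j => rsum (fun a => p a * f a j)) =
   rsum (fun j => rsum (fun a => c * (p a * f a j))).
  rewrite -rsum_scal; apply: rsum_ext => j; by rewrite -!rsum_scal.
by rewrite (rsum_ext eL) eR rsum_swap.
Qed.

Lemma exp_quad z : z <= 1/2 -> exp z <= 1 + z + 2 * z ^ 2.
Proof.
move=> hz.
have h1 : 1 + - z <= exp (- z).
  case: (Req_dec z 0) => [->|nz]; first by rewrite Ropp_0 exp_0; lra.
  apply: Rlt_le; apply: exp_ineq1_le || idtac.
  have := exp_ineq1 (- z); lra.
have e : exp z * exp (- z) = 1 by rewrite -exp_plus Rplus_opp_r exp_0.
have hpos : 0 < exp z := exp_pos z.
have h2 : exp z * (1 - z) <= 1 by nra.
have h3 : 1 <= (1 - z) * (1 + z + 2 * z ^ 2) by nra.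
nra.
Qed.

Lemma rsum_const_ord n b : rsum (fun _ : 'I_n => b) = INR n * b.
Proof.
rewrite /rsum big_const_ord; elim: n => [|n IH] /=; first by ring.
rewrite IH; case: n {IH} => [|n] /=; ring.
Qed.

Lemma chernoff_rho (T : finType) (p y : T -> R) : (forall x, 0 <= p x) -> rsum p = 1 ->
  rsum (fun x => p x * y x) < 0 ->
  exists lam, 0 < lam /\ rsum (fun x => p x * exp (lam * y x)) < 1.
Proof.
move=> hp0 hp1 hm.
set m := rsum (fun x => p x * y x) in hm.
set S := rsum (fun x => p x * y x ^ 2).
set Y := rsum (fun x => Rabs (y x)).
have hS : 0 <= S by apply: rsum_ge0 => x; apply: Rmult_le_pos => //; apply: pow2_ge_0.
have hY : 0 <= Y by apply: rsum_ge0 => x; apply: Rabs_pos.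
have hyY : forall x, Rabs (y x) <= Y.
  by move=> x; apply: (@rsum_term _ (fun x => Rabs (y x)) x) => ?; apply: Rabs_pos.
set lam := Rmin (/ (2 * (Y + 1))) (- m / (2 * (2 * S + 1))).
have l1 : lam <= / (2 * (Y + 1)) by apply: Rmin_l.
have l2 : lam <= - m / (2 * (2 * S + 1)) by apply: Rmin_r.
have lpos : 0 < lam.
  apply: Rmin_pos; first by apply: Rinv_0_lt_compat; lra.
  apply: Rdiv_lt_0_compat; lra.
exists lam; split => //.
have hz : forall x, lam * y x <= 1/2.
  move=> x; have := hyY x; have := Rle_abs (y x).
  have : lam * (2 * (Y + 1)) <= 1.
    apply: Rle_trans (Rmult_le_compat_r _ _ _ _ l1) _; first lra.
    right; field; lra.
  nra.
apply: Rle_lt_trans (rsum_le (g := fun x => p x * (1 + lam * y x + 2 * (lam * y x) ^ 2)) _) _.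
  move=> x; apply: Rmult_le_compat_l => //; exact: exp_quad.
have -> : rsum (fun x => p x * (1 + lam * y x + 2 * (lam * y x) ^ 2))
     = rsum p + lam * m + 2 * lam ^ 2 * S.
  rewrite -!rsum_scal -!rsum_plus; apply: rsum_ext => x; ring.
rewrite hp1.
have : lam * (2 * (2 * S + 1)) <= - m.
  apply: Rle_trans (Rmult_le_compat_r _ _ _ _ l2) _; first lra.
  right; field; lra.
nra.
Qed.

Lemma rprod_ln (T : finType) (f : T -> R) : (forall x, 0 < f x) ->
  rprod f = exp (rsum (fun x => ln (f x))).
Proof.
move=> H; rewrite -rprod_exp; apply: rprod_ext => x; by rewrite exp_ln.
Qed.

Lemma chernoff_point n (p a d : 'I_n -> R) c lam b :
  (forall t, 0 <= p t) -> (forall t, 0 < p t -> 0 < a t /\ 0 < d t) -> 0 < c -> 0 < lam ->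
  rprod p * (if Rlt_dec (c * exp (INR n * b) * rprod d) (rprod a) then 1 else 0)
  <= exp (- lam * ln c) * rprod (fun t => p t * exp (lam * (ln (a t) - ln (d t) - b))).
Proof.
move=> hp had hc hl.
have hR : 0 <= exp (- lam * ln c) * rprod (fun t => p t * exp (lam * (ln (a t) - ln (d t) - b))).
  apply: Rmult_le_pos; first exact: Rlt_le (exp_pos _).
  apply: rprod_ge0 => t; apply: Rmult_le_pos => //; exact: Rlt_le (exp_pos _).
case: (classic (exists t, p t = 0)) => [[t ht]|hn].
  by rewrite (rprod_eq0 ht) Rmult_0_l.
have hpp : forall t, 0 < p t.
  move=> t; case: (hp t) => // e; exfalso; apply: hn; by exists t.
case: Rlt_dec => ev; last by rewrite Rmult_0_r.
rewrite Rmult_1_r rprod_mult.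
rewrite (rprod_ln (f := a)) in ev; last by move=> t; case: (had t (hpp t)).
rewrite (rprod_ln (f := d)) in ev; last by move=> t; case: (had t (hpp t)).
rewrite rprod_exp.
rewrite -{1}(exp_ln c hc) -!exp_plus in ev.
move/exp_lt_inv: ev => ev.
have -> : rsum (fun t => lam * (ln (a t) - ln (d t) - b)) =
   lam * (rsum (fun t => ln (a t)) - rsum (fun t => ln (d t)) - INR n * b).
  rewrite -rsum_const_ord -!rsum_minus -rsum_scal; apply: rsum_ext => t; ring.
have hpr : 0 < rprod p by apply: rprod_gt0.
rewrite -Rmult_assoc (Rmult_comm (exp _)) Rmult_assoc -exp_plus.
rewrite -{1}(Rmult_1_r (rprod p)); apply: Rmult_le_compat_l; first lra.
rewrite -exp_0; apply: exp_le_exp || idtac.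
have : 0 < - lam * ln c + lam * (rsum (fun t => ln (a t)) - rsum (fun t => ln (d t)) - INR n * b).
  have : 0 < rsum (fun t => ln (a t)) - rsum (fun t => ln (d t)) - INR n * b - ln c by lra.
  nra.
move=> h; left; apply: exp_increasing; lra.
Qed.

Lemma rsum_const (I : finType) c : rsum (fun _ : I => c) = INR #|I| * c.
Proof.
rewrite /rsum big_const; elim: #|I| => [|k IH] /=; first ring.
rewrite IH; case: k {IH} => [|k] /=; ring.
Qed.

Lemma ind_le (P Q : Prop) (dP : {P} + {~ P}) (dQ : {Q} + {~ Q}) : (P -> Q) ->
  (if dP then 1 else 0) <= (if dQ then 1 else 0).
Proof. move=> H; case: dP => hp; case: dQ => hq /=; try lra; exfalso; tauto. Qed.

Lemma le_divK a b K : 0 < K -> a * K <= b -> a <= b / K.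
Proof.
move=> hK h; apply: (Rmult_le_reg_r K) => //.
have -> : b / K * K = b by field; lra.
done.
Qed.

Lemma abs_sub_le a b : 0 <= a -> 0 <= b -> Rabs (a - b) <= a + b.
Proof. move=> ha hb; apply: Rabs_le; split; lra. Qed.

Section Seq.
Variables (W U V : finType) (PhiW : W -> R) (PhiUW : W -> U -> R)
  (PhiVWU : W -> U -> V -> R).
Hypothesis hW : is_pmf PhiW.
Hypothesis hUW : forall w, is_pmf (PhiUW w).
Hypothesis hVWU : forall w u, is_pmf (PhiVWU w u).
Variable n : nat.

Definition pW (w : {ffun 'I_n -> W}) := rprod (fun t => PhiW (w t)).
Definition pU (w : {ffun 'I_n -> W}) (u : {ffun 'I_n -> U}) := rprod (fun t => PhiUW (w t) (u t)).
Definition Gam (w : {ffun 'I_n -> W}) (u : {ffun 'I_n -> U}) (v : {ffun 'I_n -> V}) :=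
  rprod (fun t => PhiVWU (w t) (u t) (v t)).
Definition GamW w v := rsum (fun u => pU w u * Gam w u v).
Definition cW (w : W) (v : V) := rsum (fun u => PhiUW w u * PhiVWU w u v).
Definition Qv (v : {ffun 'I_n -> V}) := rprod (fun t => PhiV PhiW PhiUW PhiVWU (v t)).

Lemma PhiW_ge0 w : 0 <= PhiW w. Proof. by case: hW. Qed.
Lemma PhiUW_ge0 w u : 0 <= PhiUW w u. Proof. by case: (hUW w). Qed.
Lemma PhiVWU_ge0 w u v : 0 <= PhiVWU w u v. Proof. by case: (hVWU w u). Qed.

Lemma pW_ge0 w : 0 <= pW w. Proof. apply: rprod_ge0 => t; exact: PhiW_ge0. Qed.
Lemma pU_ge0 w u : 0 <= pU w u. Proof. apply: rprod_ge0 => t; exact: PhiUW_ge0. Qed.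
Lemma Gam_ge0 w u v : 0 <= Gam w u v. Proof. apply: rprod_ge0 => t; exact: PhiVWU_ge0. Qed.
Lemma GamW_ge0 w v : 0 <= GamW w v.
Proof. apply: rsum_ge0 => u; apply: Rmult_le_pos; [exact: pU_ge0|exact: Gam_ge0]. Qed.

Lemma pW_sum : rsum pW = 1.
Proof. rewrite /pW (prod_sum (fun _ => PhiW)) -(rprod1 'I_n); apply: rprod_ext => t; by case: hW. Qed.
Lemma pU_sum w : rsum (pU w) = 1.
Proof. rewrite /pU (prod_sum (fun t => PhiUW (w t))) -(rprod1 'I_n); apply: rprod_ext => t; by case: (hUW (w t)). Qed.

Lemma cW_ge0 w v : 0 <= cW w v.
Proof. apply: rsum_ge0 => u; apply: Rmult_le_pos; [exact: PhiUW_ge0|exact: PhiVWU_ge0]. Qed.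

Lemma GamW_prod w v : GamW w v = rprod (fun t => cW (w t) (v t)).
Proof.
rewrite /GamW /cW -prod_sum; apply: rsum_ext => u; by rewrite /pU /Gam -rprod_mult.
Qed.

Lemma PhiV_cW v : PhiV PhiW PhiUW PhiVWU v = rsum (fun w => PhiW w * cW w v).
Proof.
rewrite /PhiV; apply: rsum_ext => w; rewrite /cW -rsum_scal; apply: rsum_ext => u.
rewrite /pWUV; ring.
Qed.

Lemma Qv_sum_GamW v : rsum (fun w => pW w * GamW w v) = Qv v.
Proof.
rewrite /Qv.
transitivity (rsum (fun w : {ffun 'I_n -> W} => rprod (fun t => PhiW (w t) * cW (w t) (v t)))).
  by apply: rsum_ext => w; rewrite GamW_prod /pW rprod_mult.
rewrite (prod_sum (fun t w => PhiW w * cW w (v t))); apply: rprod_ext => t.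
by rewrite PhiV_cW.
Qed.

Lemma PhiV_sum : rsum (PhiV PhiW PhiUW PhiVWU) = 1.
Proof.
rewrite /PhiV rsum_swap; case: hW => _ <-; apply: rsum_ext => w.
rewrite rsum_swap.
transitivity (rsum (fun u => PhiW w * PhiUW w u)).
  apply: rsum_ext => u; case: (hVWU w u) => _ h.
  rewrite -[RHS]Rmult_1_r -h -rsum_scal; apply: rsum_ext => v; rewrite /pWUV; ring.
rewrite rsum_scal; case: (hUW w) => _ ->; ring.
Qed.

Lemma Qv_sum : rsum Qv = 1.
Proof.
rewrite /Qv (prod_sum (fun _ v => PhiV PhiW PhiUW PhiVWU v)) -(rprod1 'I_n).
by apply: rprod_ext => t; rewrite PhiV_sum.
Qed.

Lemma Qv_ge0 v : 0 <= Qv v.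
Proof.
apply: rprod_ge0 => t; rewrite PhiV_cW; apply: rsum_ge0 => w.
apply: Rmult_le_pos; [exact: PhiW_ge0|exact: cW_ge0].
Qed.


Section Code.
Variables (M1 M2 : nat) (K : R).
Hypotheses (hM1 : (0 < M1)%nat) (hM2 : (0 < M2)%nat) (hK : 0 < K).
Local Notation sW := {ffun 'I_n -> W}.
Local Notation sU := {ffun 'I_n -> U}.
Local Notation sV := {ffun 'I_n -> V}.

Definition Gd (w : sW) (u : sU) (v : sV) :=
  if Rle_dec (Gam w u v * K) (INR (M1 * M2) * Qv v) then
    (if Rle_dec (Gam w u v * pW w * K) (INR M2 * Qv v) then Gam w u v else 0) else 0.
Definition mG w v := rsum (fun u => pU w u * Gd w u v).
Definition Bd w u v := Gam w u v - Gd w u v.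
Definition mB w v := rsum (fun u => pU w u * Bd w u v).
Definition qU (w : sW) (x : {ffun 'I_M2 -> sU}) := rprod (fun k => pU w (x k)).
Definition Yg w (x : {ffun 'I_M2 -> sU}) v := / INR M2 * rsum (fun k => Gd w (x k) v - mG w v).
Definition Vw w v := rsum (fun u => pU w u * Gd w u v ^ 2).

Lemma INR_M1 : 0 < INR M1. Proof. apply: lt_0_INR; apply/ltP. exact: hM1. Qed.
Lemma INR_M2 : 0 < INR M2. Proof. apply: lt_0_INR; apply/ltP. exact: hM2. Qed.
Lemma INR_M12 : INR (M1 * M2) = INR M1 * INR M2. Proof. by rewrite -mult_INR. Qed.

Lemma Gd_ge0 w u v : 0 <= Gd w u v.
Proof. rewrite /Gd; case: (Rle_dec (Gam w u v * K) _) => _ /=; last lra; case: (Rle_dec (Gam w u v * pW w * K) _) => _ /=; [exact: Gam_ge0|lra]. Qed.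
Lemma Gd_le w u v : Gd w u v <= Gam w u v.
Proof. rewrite /Gd; case: (Rle_dec (Gam w u v * K) _) => _ /=; [case: (Rle_dec (Gam w u v * pW w * K) _) => _ /=|]; try lra; exact: Gam_ge0. Qed.
Lemma Bd_ge0 w u v : 0 <= Bd w u v.
Proof. rewrite /Bd; have := Gd_le w u v; lra. Qed.
Lemma Gd_sq1 w u v : Gd w u v ^ 2 <= Gd w u v * (INR (M1 * M2) * Qv v / K).
Proof.
rewrite /Gd; case: (Rle_dec (Gam w u v * K) _) => h1 /=; last (simpl; nra).
case: (Rle_dec (Gam w u v * pW w * K) _) => h2 /=; last (simpl; nra).
have := Gam_ge0 w u v => h0.
have : Gam w u v <= INR (M1 * M2) * Qv v / K.
  exact: le_divK.
move=> h; simpl; rewrite Rmult_1_r; apply: Rmult_le_compat_l => //.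
Qed.
Lemma Gd_sq2 w u v : pW w * Gd w u v ^ 2 <= Gd w u v * (INR M2 * Qv v / K).
Proof.
rewrite /Gd; case: (Rle_dec (Gam w u v * K) _) => h1 /=; last (simpl; nra).
case: (Rle_dec (Gam w u v * pW w * K) _) => h2 /=; last (simpl; nra).
have := Gam_ge0 w u v => h0.
have : Gam w u v * pW w <= INR M2 * Qv v / K.
  exact: le_divK.
move=> h; simpl; rewrite Rmult_1_r.
have -> : pW w * (Gam w u v * Gam w u v) = Gam w u v * (Gam w u v * pW w) by ring.
by apply: Rmult_le_compat_l.
Qed.

Lemma qU_sum w : rsum (qU w) = 1.
Proof.
rewrite /qU (prod_sum (fun _ => pU w)) -(rprod1 'I_M2); apply: rprod_ext => k.
exact: pU_sum.
Qed.
Lemma qU_ge0 w x : 0 <= qU w x.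
Proof. apply: rprod_ge0 => k; exact: pU_ge0. Qed.

Lemma Yg_mean w v : rsum (fun x => qU w x * Yg w x v) = 0.
Proof.
have hp : forall k : 'I_M2, rsum ((fun _ => pU w) k) = 1 by move=> k; exact: pU_sum.
transitivity (rsum (fun k : 'I_M2 => rsum (fun x : {ffun 'I_M2 -> sU} =>
   / INR M2 * (qU w x * (Gd w (x k) v - mG w v))))).
  rewrite [RHS]rsum_swap; apply: rsum_ext => x; rewrite /Yg.
  rewrite -rsum_scal -rsum_scal; apply: rsum_ext => k; ring.
rewrite (rsum_ext (g := fun _ => 0)); first by rewrite rsum0.
move=> k; rewrite rsum_scal; rewrite /qU (marg1 hp k (fun u => Gd w u v - mG w v)).
rewrite (center0 _ (pU_sum w)); ring.
Qed.

Lemma Yg_sq w v : rsum (fun x => qU w x * Yg w x v ^ 2) <= / INR M2 * Vw w v.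
Proof.
have := INR_M2 => hm.
transitivity ((/ INR M2) ^ 2 * rsum (fun x : {ffun 'I_M2 -> sU} => qU w x *
    (rsum (fun k => Gd w (x k) v - mG w v)) ^ 2)).
  right; rewrite -rsum_scal; apply: rsum_ext => x; rewrite /Yg; ring.
have H := @var_iid 'I_M2 _ (pU w) (fun u => Gd w u v) (pU_sum w).
rewrite /qU /mG; apply: Rle_trans (Rmult_le_compat_l _ _ _ _ H) _.
  apply: pow_le; apply: Rlt_le; exact: Rinv_0_lt_compat.
rewrite card_ord /Vw; right; field; lra.
Qed.

Lemma mG_sum v : rsum (fun w => pW w * mG w v) <= Qv v.
Proof.
rewrite -Qv_sum_GamW; apply: rsum_le => w; apply: Rmult_le_compat_l; first exact: pW_ge0.
apply: rsum_le => u; apply: Rmult_le_compat_l; [exact: pU_ge0|exact: Gd_le].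
Qed.

Lemma mG_ge0 w v : 0 <= mG w v.
Proof. apply: rsum_ge0 => u; apply: Rmult_le_pos; [exact: pU_ge0|exact: Gd_ge0]. Qed.
Lemma Vw_ge0 w v : 0 <= Vw w v.
Proof. apply: rsum_ge0 => u; apply: Rmult_le_pos; [exact: pU_ge0|exact: pow2_ge_0]. Qed.

Lemma A_bound v : rsum (fun w => pW w * (/ INR M2 * Vw w v)) <= INR M1 * Qv v ^ 2 / K.
Proof.
have h2 := INR_M2; have h1 := INR_M1.
apply: Rle_trans (rsum_le (g := fun w => (INR M1 * Qv v / K) * (pW w * mG w v)) _) _.
  move=> w.
  have : Vw w v <= INR (M1 * M2) * Qv v / K * mG w v.
    rewrite /Vw /mG -rsum_scal; apply: rsum_le => u.
    have := Gd_sq1 w u v; have := pU_ge0 w u; nra.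
  rewrite INR_M12 => h; have := pW_ge0 w => hp.
  have -> : INR M1 * Qv v / K * (pW w * mG w v) = pW w * (/ INR M2 * (INR M1 * INR M2 * Qv v / K * mG w v)).
    field; lra.
  apply: Rmult_le_compat_l => //; apply: Rmult_le_compat_l => //; apply: Rlt_le; exact: Rinv_0_lt_compat.
rewrite rsum_scal.
have hq := Qv_ge0 v.
have : 0 <= INR M1 * Qv v / K.
  apply: Rmult_le_pos; [nra|apply: Rlt_le; exact: Rinv_0_lt_compat].
have := mG_sum v; move=> hm hc.
have -> : INR M1 * Qv v ^ 2 / K = INR M1 * Qv v / K * Qv v by field; lra.
by apply: Rmult_le_compat_l.
Qed.

Lemma B_bound v : rsum (fun w => pW w * pW w * (/ INR M2 * Vw w v)) <= Qv v ^ 2 / K.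
Proof.
have h2 := INR_M2.
apply: Rle_trans (rsum_le (g := fun w => (Qv v / K) * (pW w * mG w v)) _) _.
  move=> w.
  have : pW w * Vw w v <= INR M2 * Qv v / K * mG w v.
    rewrite /Vw /mG -!rsum_scal; apply: rsum_le => u.
    have := Gd_sq2 w u v; have := pU_ge0 w u; nra.
  move=> h; have := pW_ge0 w => hp.
  have -> : Qv v / K * (pW w * mG w v) = pW w * (/ INR M2 * (INR M2 * Qv v / K * mG w v)).
    field; lra.
  have -> : pW w * pW w * (/ INR M2 * Vw w v) = pW w * (/ INR M2 * (pW w * Vw w v)) by ring.
  apply: Rmult_le_compat_l => //; apply: Rmult_le_compat_l => //; apply: Rlt_le; exact: Rinv_0_lt_compat.
rewrite rsum_scal.
have hq := Qv_ge0 v.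
have : 0 <= Qv v / K.
  apply: Rmult_le_pos; [nra|apply: Rlt_le; exact: Rinv_0_lt_compat].
have := mG_sum v; move=> hm hc.
have -> : Qv v ^ 2 / K = Qv v / K * Qv v by field; lra.
by apply: Rmult_le_compat_l.
Qed.

Lemma E2g (B1 : {ffun 'I_M1 -> sW}) v :
  rsum (fun B2 : {ffun sW -> {ffun 'I_M2 -> sU}} => rprod (fun w => qU w (B2 w)) *
     (/ INR M1 * rsum (fun j => Yg (B1 j) (B2 (B1 j)) v)) ^ 2)
  <= (/ INR M1) ^ 2 * rsum (fun j => rsum (fun j' =>
        if B1 j == B1 j' then / INR M2 * Vw (B1 j) v else 0)).
Proof.
transitivity ((/ INR M1) ^ 2 * rsum (fun B2 : {ffun sW -> {ffun 'I_M2 -> sU}} =>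
   rprod (fun w => qU w (B2 w)) * (rsum (fun j => Yg (B1 j) (B2 (B1 j)) v)) ^ 2)).
  right; rewrite -rsum_scal; apply: rsum_ext => B2; ring.
have H := @var_map sW {ffun 'I_M2 -> sU} 'I_M1 qU qU_sum (fun w x => Yg w x v)
   (fun w => Yg_mean w v) (fun j => B1 j).
rewrite H; apply: Rmult_le_compat_l; first by apply: pow_le; apply: Rlt_le; apply: Rinv_0_lt_compat; exact: INR_M1.
apply: rsum_le => j; apply: rsum_le => j'; case: eqP => _; [exact: Yg_sq | lra].
Qed.

Lemma pB1_ge0 (B1 : {ffun 'I_M1 -> sW}) : 0 <= rprod (fun j => pW (B1 j)).
Proof. apply: rprod_ge0 => j; exact: pW_ge0. Qed.

Lemma pB1_sum : rsum (fun B1 : {ffun 'I_M1 -> sW} => rprod (fun j => pW (B1 j))) = 1.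
Proof. have := @marg0 'I_M1 sW (fun _ => pW) (fun _ => pW_sum); done. Qed.

Lemma E1g v : rsum (fun B1 : {ffun 'I_M1 -> sW} => rprod (fun j => pW (B1 j)) *
   sqrt ((/ INR M1) ^ 2 * rsum (fun j => rsum (fun j' =>
        if B1 j == B1 j' then / INR M2 * Vw (B1 j) v else 0))))
  <= sqrt (2 * Qv v ^ 2 / K).
Proof.
have h1 := INR_M1; have h2 := INR_M2.
pose S (B1 : {ffun 'I_M1 -> sW}) := rsum (fun j => rsum (fun j' =>
        if B1 j == B1 j' then / INR M2 * Vw (B1 j) v else 0)).
have hS : forall B1, 0 <= S B1.
  move=> B1; apply: rsum_ge0 => j; apply: rsum_ge0 => j'; case: eqP => _; last lra.
  apply: Rmult_le_pos; [apply: Rlt_le; exact: Rinv_0_lt_compat| exact: Vw_ge0].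
have hc : 0 <= (/ INR M1) ^ 2 by apply: pow2_ge_0.
apply: Rle_trans (cauchy (fun B1 => sqrt ((/ INR M1) ^ 2 * S B1)) pB1_ge0 pB1_sum) _.
apply: sqrt_le_1_alt.
rewrite (rsum_ext (g := fun B1 : {ffun 'I_M1 -> sW} => (/ INR M1) ^ 2 * (rprod (fun j => pW (B1 j)) * S B1))); last first.
  move=> B1; rewrite pow2_sqrt; [ring|]; apply: Rmult_le_pos => //.
rewrite rsum_scal.
have := @pair_bound 'I_M1 sW pW (fun w => / INR M2 * Vw w v) pW_ge0 pW_sum.
move=> /(_ (fun w => Rmult_le_pos _ _ (Rlt_le _ _ (Rinv_0_lt_compat _ h2)) (Vw_ge0 w v))).
rewrite card_ord -/S => hP.
apply: Rle_trans (Rmult_le_compat_l _ _ _ hc hP) _.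
have hA := A_bound v; have hB := B_bound v.
have hM1' : 0 <= INR M1 by lra.
apply: Rle_trans (Rmult_le_compat_l _ _ _ hc (Rplus_le_compat _ _ _ _
   (Rmult_le_compat_l _ _ _ hM1' hA)
   (Rmult_le_compat_l _ _ _ (Rmult_le_pos _ _ hM1' hM1') hB))) _.
right; field; lra.
Qed.

Definition Xb (B1 : {ffun 'I_M1 -> sW}) (B2 : {ffun sW -> {ffun 'I_M2 -> sU}}) v :=
  / INR M1 * rsum (fun j => / INR M2 * rsum (fun k => Bd (B1 j) (B2 (B1 j) k) v - mB (B1 j) v)).

Lemma mB_ge0 w v : 0 <= mB w v.
Proof. apply: rsum_ge0 => u; apply: Rmult_le_pos; [exact: pU_ge0|exact: Bd_ge0]. Qed.

Lemma pB2_ge0 (B2 : {ffun sW -> {ffun 'I_M2 -> sU}}) : 0 <= rprod (fun w => qU w (B2 w)).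
Proof. apply: rprod_ge0 => w; exact: qU_ge0. Qed.

Lemma pB2_sum : rsum (fun B2 : {ffun sW -> {ffun 'I_M2 -> sU}} => rprod (fun w => qU w (B2 w))) = 1.
Proof. exact: (@marg0 sW _ qU qU_sum). Qed.

Lemma Ebd w k v : rsum (fun B2 : {ffun sW -> {ffun 'I_M2 -> sU}} =>
    rprod (fun w' => qU w' (B2 w')) * Bd w (B2 w k) v) = mB w v.
Proof.
rewrite (@marg1 sW _ qU qU_sum w (fun x => Bd w (x k) v)).
exact: (@marg1 'I_M2 _ (fun _ => pU w) (fun _ => pU_sum w) k (fun u => Bd w u v)).
Qed.

Lemma E2b B1 v : rsum (fun B2 : {ffun sW -> {ffun 'I_M2 -> sU}} =>
   rprod (fun w => qU w (B2 w)) * Rabs (Xb B1 B2 v)) <= / INR M1 * rsum (fun j => 2 * mB (B1 j) v).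
Proof.
have h1 := INR_M1; have h2 := INR_M2.
have hi1 : 0 <= / INR M1 by apply: Rlt_le; apply: Rinv_0_lt_compat.
have hi2 : 0 <= / INR M2 by apply: Rlt_le; apply: Rinv_0_lt_compat.
apply: Rle_trans (rsum_le (g := fun B2 : {ffun sW -> {ffun 'I_M2 -> sU}} =>
   rprod (fun w => qU w (B2 w)) * (/ INR M1 * rsum (fun j => / INR M2 * rsum (fun k =>
      Bd (B1 j) (B2 (B1 j) k) v + mB (B1 j) v)))) _) _.
  move=> B2; apply: Rmult_le_compat_l; first exact: pB2_ge0.
  rewrite /Xb Rabs_mult (Rabs_pos_eq _ hi1); apply: Rmult_le_compat_l => //.
  apply: Rle_trans (rsum_abs _) _; apply: rsum_le => j.
  rewrite Rabs_mult (Rabs_pos_eq _ hi2); apply: Rmult_le_compat_l => //.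
  apply: Rle_trans (rsum_abs _) _; apply: rsum_le => k.
  apply: abs_sub_le; [exact: Bd_ge0|exact: mB_ge0].
right.
transitivity (/ INR M1 * rsum (fun j => / INR M2 * rsum (fun k =>
   rsum (fun B2 : {ffun sW -> {ffun 'I_M2 -> sU}} => rprod (fun w => qU w (B2 w)) *
      (Bd (B1 j) (B2 (B1 j) k) v + mB (B1 j) v))))).
  exact: lin_swap.
congr (_ * _); apply: rsum_ext => j.
rewrite (rsum_ext (g := fun k => 2 * mB (B1 j) v)); last first.
  move=> k; rewrite (rsum_ext (g := fun B2 : {ffun sW -> {ffun 'I_M2 -> sU}} =>
     rprod (fun w => qU w (B2 w)) * Bd (B1 j) (B2 (B1 j) k) v +
     mB (B1 j) v * rprod (fun w => qU w (B2 w)))); last by move=> B2; ring.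
  rewrite rsum_plus Ebd rsum_scal pB2_sum; ring.
rewrite rsum_const' card_ord; field; lra.
Qed.

Lemma E1b v : rsum (fun B1 : {ffun 'I_M1 -> sW} => rprod (fun j => pW (B1 j)) *
   (/ INR M1 * rsum (fun j => 2 * mB (B1 j) v))) = 2 * rsum (fun w => pW w * mB w v).
Proof.
have h1 := INR_M1.
transitivity (/ INR M1 * rsum (fun j : 'I_M1 => rsum (fun B1 : {ffun 'I_M1 -> sW} =>
   rprod (fun j => pW (B1 j)) * (2 * mB (B1 j) v)))).
  exact: lin_swap1.
rewrite (rsum_ext (g := fun _ => 2 * rsum (fun w => pW w * mB w v))); last first.
  move=> j; rewrite (@marg1 'I_M1 _ (fun _ => pW) (fun _ => pW_sum) j (fun w => 2 * mB w v)).
  rewrite -rsum_scal; apply: rsum_ext => w; ring.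
rewrite rsum_const' card_ord; field; lra.
Qed.

Definition G1 w v := if Rle_dec (GamW w v * K) (INR M1 * Qv v) then GamW w v else 0.
Definition B1d w v := GamW w v - G1 w v.
Definition mG1 v := rsum (fun w => pW w * G1 w v).
Definition mB1 v := rsum (fun w => pW w * B1d w v).

Lemma G1_ge0 w v : 0 <= G1 w v.
Proof. rewrite /G1; case: Rle_dec => _ /=; [exact: GamW_ge0|lra]. Qed.
Lemma G1_le w v : G1 w v <= GamW w v.
Proof. rewrite /G1; case: Rle_dec => _ /=; [lra|exact: GamW_ge0]. Qed.
Lemma B1d_ge0 w v : 0 <= B1d w v.
Proof. rewrite /B1d; have := G1_le w v; lra. Qed.
Lemma mB1_ge0 v : 0 <= mB1 v.
Proof. apply: rsum_ge0 => w; apply: Rmult_le_pos; [exact: pW_ge0|exact: B1d_ge0]. Qed.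
Lemma G1_sq w v : G1 w v ^ 2 <= G1 w v * (INR M1 * Qv v / K).
Proof.
rewrite /G1; case: Rle_dec => h1 /=; last nra.
have := GamW_ge0 w v => h0.
have h : GamW w v <= INR M1 * Qv v / K by exact: le_divK.
rewrite Rmult_1_r; by apply: Rmult_le_compat_l.
Qed.

Lemma E1g' v : rsum (fun B1 : {ffun 'I_M1 -> sW} => rprod (fun j => pW (B1 j)) *
   Rabs (/ INR M1 * rsum (fun j => G1 (B1 j) v - mG1 v))) <= sqrt (Qv v ^ 2 / K).
Proof.
have h1 := INR_M1.
apply: Rle_trans (cs_abs (fun B1 : {ffun 'I_M1 -> sW} => / INR M1 * rsum (fun j => G1 (B1 j) v - mG1 v)) pB1_ge0 pB1_sum) _.
apply: sqrt_le_1_alt.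
rewrite (rsum_ext (g := fun B1 : {ffun 'I_M1 -> sW} => (/ INR M1) ^ 2 * (rprod (fun j => pW (B1 j)) *
     (rsum (fun j => G1 (B1 j) v - rsum (fun y => pW y * G1 y v))) ^ 2))); last first.
  by move=> B1; rewrite /mG1; ring.
rewrite rsum_scal.
have H := @var_iid 'I_M1 _ pW (fun w => G1 w v) pW_sum.
have hc : 0 <= (/ INR M1) ^ 2 by apply: pow2_ge_0.
apply: Rle_trans (Rmult_le_compat_l _ _ _ hc H) _.
rewrite card_ord.
have : rsum (fun x => pW x * G1 x v ^ 2) <= (INR M1 * Qv v / K) * Qv v.
  apply: Rle_trans (rsum_le (g := fun x => (INR M1 * Qv v / K) * (pW x * G1 x v)) _) _.
    move=> x; have := G1_sq x v; have := pW_ge0 x; nra.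
  rewrite rsum_scal; apply: Rmult_le_compat_l.
    apply: Rmult_le_pos; [apply: Rmult_le_pos; [lra|exact: Qv_ge0]|apply: Rlt_le; exact: Rinv_0_lt_compat].
  rewrite -Qv_sum_GamW; apply: rsum_le => x; apply: Rmult_le_compat_l; [exact: pW_ge0|exact: G1_le].
move=> h.
apply: Rle_trans (Rmult_le_compat_l _ _ _ hc (Rmult_le_compat_l _ _ _ (pos_INR _) h)) _.
right; field; lra.
Qed.

Lemma E1b' v : rsum (fun B1 : {ffun 'I_M1 -> sW} => rprod (fun j => pW (B1 j)) *
   Rabs (/ INR M1 * rsum (fun j => B1d (B1 j) v - mB1 v))) <= 2 * mB1 v.
Proof.
have h1 := INR_M1.
have hi1 : 0 <= / INR M1 by apply: Rlt_le; apply: Rinv_0_lt_compat.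
apply: Rle_trans (rsum_le (g := fun B1 : {ffun 'I_M1 -> sW} => rprod (fun j => pW (B1 j)) *
   (/ INR M1 * rsum (fun j => B1d (B1 j) v + mB1 v))) _) _.
  move=> B1; apply: Rmult_le_compat_l; first exact: pB1_ge0.
  rewrite Rabs_mult (Rabs_pos_eq _ hi1); apply: Rmult_le_compat_l => //.
  apply: Rle_trans (rsum_abs _) _; apply: rsum_le => j.
  apply: abs_sub_le; [exact: B1d_ge0|exact: mB1_ge0].
rewrite lin_swap1.
rewrite (rsum_ext (g := fun _ => 2 * mB1 v)); last first.
  move=> j; rewrite (@marg1 'I_M1 _ (fun _ => pW) (fun _ => pW_sum) j (fun w => B1d w v + mB1 v)).
  rewrite (rsum_ext (g := fun w => pW w * B1d w v + mB1 v * pW w)); last by move=> w; ring.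
  by rewrite rsum_plus rsum_scal pW_sum -/(mB1 v); ring.
rewrite rsum_const' card_ord; right; field; lra.
Qed.

Lemma decomp (B1 : {ffun 'I_M1 -> sW}) (B2 : {ffun sW -> {ffun 'I_M2 -> sU}}) v :
  PVn PhiVWU B1 B2 v - QVn PhiW PhiUW PhiVWU v =
  / INR M1 * rsum (fun j => Yg (B1 j) (B2 (B1 j)) v) + Xb B1 B2 v +
  / INR M1 * rsum (fun j => G1 (B1 j) v - mG1 v) + / INR M1 * rsum (fun j => B1d (B1 j) v - mB1 v).
Proof.
have h1 := INR_M1; have h2 := INR_M2.
have ea : forall w (x : {ffun 'I_M2 -> sU}), Yg w x v + / INR M2 * rsum (fun k => Bd w (x k) v - mB w v)
   = / INR M2 * rsum (fun k => Gam w (x k) v) - GamW w v.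
  move=> w x; rewrite /Yg -Rmult_plus_distr_l -rsum_plus.
  have eG : GamW w v = mG w v + mB w v.
    rewrite /GamW /mG /mB -rsum_plus; apply: rsum_ext => u; rewrite /Bd; ring.
  rewrite (rsum_ext (g := fun k => Gam w (x k) v + (- GamW w v))); last first.
    by move=> k; rewrite eG /Bd; ring.
  rewrite rsum_plus rsum_const' card_ord; field; lra.
have eb : forall w, G1 w v - mG1 v + (B1d w v - mB1 v) = GamW w v - Qv v.
  move=> w; rewrite -Qv_sum_GamW /mG1 /mB1.
  rewrite (rsum_ext (f := fun w => pW w * GamW w v) (g := fun w => pW w * G1 w v + pW w * B1d w v)); last first.
    by move=> w'; rewrite /B1d; ring.
  rewrite rsum_plus /B1d; ring.
have -> : PVn PhiVWU B1 B2 v = / INR M1 * rsum (fun j => / INR M2 * rsum (fun k => Gam (B1 j) (B2 (B1 j) k) v)).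
  rewrite /PVn INR_M12 Rinv_mult Rmult_assoc; congr (_ * _).
  by rewrite -rsum_scal.
have -> : QVn PhiW PhiUW PhiVWU v = / INR M1 * rsum (fun j : 'I_M1 => Qv v).
  rewrite rsum_const' card_ord /QVn /Qv; field; lra.
rewrite /Xb.
have E : forall j, / INR M2 * rsum (fun k => Gam (B1 j) (B2 (B1 j) k) v) - Qv v =
   Yg (B1 j) (B2 (B1 j)) v + / INR M2 * rsum (fun k => Bd (B1 j) (B2 (B1 j) k) v - mB (B1 j) v)
   + (G1 (B1 j) v - mG1 v + (B1d (B1 j) v - mB1 v)).
  move=> j; rewrite ea eb; ring.
rewrite -Rmult_minus_distr_l -rsum_minus (rsum_ext E) !rsum_plus; ring.
Qed.

Definition Fv (B1 : {ffun 'I_M1 -> sW}) (B2 : {ffun sW -> {ffun 'I_M2 -> sU}}) v :=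
  Rabs (/ INR M1 * rsum (fun j => Yg (B1 j) (B2 (B1 j)) v)) + Rabs (Xb B1 B2 v) +
  Rabs (/ INR M1 * rsum (fun j => G1 (B1 j) v - mG1 v)) + Rabs (/ INR M1 * rsum (fun j => B1d (B1 j) v - mB1 v)).

Lemma tv_le B1 B2 : tv PhiW PhiUW PhiVWU B1 B2 <= / 2 * rsum (fun v => Fv B1 B2 v).
Proof.
rewrite /tv; apply: Rmult_le_compat_l; first lra.
apply: rsum_le => v; rewrite decomp /Fv.
apply: Rle_trans (Rabs_triang _ _) _; apply: Rplus_le_compat_r.
apply: Rle_trans (Rabs_triang _ _) _; apply: Rplus_le_compat_r.
exact: Rabs_triang.
Qed.


Lemma inner_B2 (B1 : {ffun 'I_M1 -> sW}) v :
  rsum (fun B2 : {ffun sW -> {ffun 'I_M2 -> sU}} => rprod (fun w => qU w (B2 w)) * Fv B1 B2 v)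
  <= sqrt ((/ INR M1) ^ 2 * rsum (fun j => rsum (fun j' =>
        if B1 j == B1 j' then / INR M2 * Vw (B1 j) v else 0)))
     + / INR M1 * rsum (fun j => 2 * mB (B1 j) v)
     + Rabs (/ INR M1 * rsum (fun j => G1 (B1 j) v - mG1 v))
     + Rabs (/ INR M1 * rsum (fun j => B1d (B1 j) v - mB1 v)).
Proof.
rewrite /Fv.
set c := Rabs (/ INR M1 * rsum (fun j => G1 (B1 j) v - mG1 v)).
set d := Rabs (/ INR M1 * rsum (fun j => B1d (B1 j) v - mB1 v)).
rewrite (rsum_ext (g := fun B2 : {ffun sW -> {ffun 'I_M2 -> sU}} =>
   rprod (fun w => qU w (B2 w)) * Rabs (/ INR M1 * rsum (fun j => Yg (B1 j) (B2 (B1 j)) v)) +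
   rprod (fun w => qU w (B2 w)) * Rabs (Xb B1 B2 v) + (c + d) * rprod (fun w => qU w (B2 w)))); last first.
  by move=> B2; ring.
rewrite !rsum_plus rsum_scal pB2_sum Rmult_1_r.
have e := E2b B1 v.
have g : rsum (fun B2 : {ffun sW -> {ffun 'I_M2 -> sU}} => rprod (fun w => qU w (B2 w)) *
     Rabs (/ INR M1 * rsum (fun j => Yg (B1 j) (B2 (B1 j)) v))) <=
     sqrt ((/ INR M1) ^ 2 * rsum (fun j => rsum (fun j' =>
        if B1 j == B1 j' then / INR M2 * Vw (B1 j) v else 0))).
  apply: Rle_trans (cs_abs (fun B2 : {ffun sW -> {ffun 'I_M2 -> sU}} =>
       / INR M1 * rsum (fun j => Yg (B1 j) (B2 (B1 j)) v)) pB2_ge0 pB2_sum) _.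
  apply: sqrt_le_1_alt; exact: E2g.
apply: Rle_trans (Rplus_le_compat_r _ _ _ (Rplus_le_compat _ _ _ _ g e)) _; right; ring.
Qed.

Lemma exp_tv_bound : expected_tv PhiW PhiUW PhiVWU n M1 M2 <=
  / 2 * (sqrt (2 / K) + sqrt (1 / K) + 2 * rsum (fun v => rsum (fun w => pW w * mB w v))
         + 2 * rsum mB1).
Proof.
rewrite /expected_tv.
apply: Rle_trans (rsum_le (g := fun B1 : {ffun 'I_M1 -> sW} =>
   rprod (fun j => pW (B1 j)) * (/ 2 * rsum (fun v => rsum (fun B2 : {ffun sW -> {ffun 'I_M2 -> sU}} =>
       rprod (fun w => qU w (B2 w)) * Fv B1 B2 v)))) _) _.
  move=> B1.
  apply: Rle_trans (rsum_le (g := fun B2 : {ffun sW -> {ffun 'I_M2 -> sU}} =>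
     rprod (fun j => pW (B1 j)) * (/ 2 * rsum (fun v => rprod (fun w => qU w (B2 w)) * Fv B1 B2 v))) _) _.
    move=> B2; rewrite /probB1 /probB2.
    rewrite (rsum_ext (f := fun v => rprod (fun w => qU w (B2 w)) * Fv B1 B2 v)
       (g := fun v => rprod (fun w => qU w (B2 w)) * Fv B1 B2 v)) // rsum_scal.
    have h1 := pB1_ge0 B1; have h2 := pB2_ge0 B2.
    have := tv_le B1 B2.
    change (rprod (fun w => qU w (B2 w))) with
       (rprod (fun wn : sW => rprod (fun k => rprod (fun t => PhiUW (wn t) (B2 wn k t))))) in h2 |- *.
    change (rprod (fun j => pW (B1 j))) with
       (rprod (fun j => rprod (fun t => PhiW (B1 j t)))) in h1 |- *.
    move=> h.
    set a := rprod _ in h1 |- *; set b := rprod _ in h2 |- *.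
    have -> : a * (/ 2 * (b * rsum (Fv B1 B2))) = a * b * (/ 2 * rsum (Fv B1 B2)) by ring.
    apply: Rmult_le_compat_l; [exact: Rmult_le_pos|exact: h].
  right; by rewrite [in LHS]rsum_scal [in LHS]rsum_scal [in LHS]rsum_swap.
rewrite lin_swap1; apply: Rmult_le_compat_l; first lra.
have hsq : forall c q, 0 <= c -> 0 <= q -> sqrt (c * q ^ 2 / K) = sqrt (c / K) * q.
  move=> c q hc hq; rewrite (_ : c * q ^ 2 / K = c / K * q ^ 2); last by field; lra.
  rewrite sqrt_mult_alt ?sqrt_pow2 //; apply: Rmult_le_pos => //; apply: Rlt_le; exact: Rinv_0_lt_compat.
apply: Rle_trans (rsum_le (g := fun v => sqrt (2 / K) * Qv v + 2 * rsum (fun w => pW w * mB w v)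
    + sqrt (1 / K) * Qv v + 2 * mB1 v) _) _; last first.
  rewrite !rsum_plus !rsum_scal Qv_sum; right; ring.
move=> v.
apply: Rle_trans (rsum_le (g := fun B1 : {ffun 'I_M1 -> sW} => rprod (fun j => pW (B1 j)) *
   sqrt ((/ INR M1) ^ 2 * rsum (fun j => rsum (fun j' =>
        if B1 j == B1 j' then / INR M2 * Vw (B1 j) v else 0)))
   + rprod (fun j => pW (B1 j)) * (/ INR M1 * rsum (fun j => 2 * mB (B1 j) v))
   + rprod (fun j => pW (B1 j)) * Rabs (/ INR M1 * rsum (fun j => G1 (B1 j) v - mG1 v))
   + rprod (fun j => pW (B1 j)) * Rabs (/ INR M1 * rsum (fun j => B1d (B1 j) v - mB1 v))) _) _.
  move=> B1; rewrite -!Rmult_plus_distr_l; apply: Rmult_le_compat_l; first exact: pB1_ge0.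
  exact: inner_B2.
rewrite !rsum_plus E1b.
have g1 := E1g v; have g2 := E1g' v; have g3 := E1b' v.
have q0 := Qv_ge0 v.
rewrite -(hsq 2 (Qv v)); [|lra|exact: q0].
rewrite -(hsq 1 (Qv v)); [|lra|exact: q0].
rewrite Rmult_1_l.
apply: Rplus_le_compat; [apply: Rplus_le_compat; [apply: Rplus_le_compat; [exact: g1|lra]|exact: g2]|exact: g3].
Qed.

End Code.

Lemma fact3 (f : W -> U -> V -> R) :
  rsum (fun w : {ffun 'I_n -> W} => rsum (fun u : {ffun 'I_n -> U} => rsum (fun v : {ffun 'I_n -> V} =>
    rprod (fun t => f (w t) (u t) (v t)))))
  = (rsum (fun w => rsum (fun u => rsum (fun v => f w u v)))) ^ n.
Proof.
rewrite -rprod_const_ord.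
rewrite (rsum_ext (g := fun w : {ffun 'I_n -> W} => rprod (fun t => rsum (fun u => rsum (fun v => f (w t) u v))))).
  exact: (prod_sum (fun _ w => rsum (fun u => rsum (fun v => f w u v)))).
move=> w.
rewrite (rsum_ext (g := fun u : {ffun 'I_n -> U} => rprod (fun t => rsum (fun v => f (w t) (u t) v)))).
  exact: (prod_sum (fun t u => rsum (fun v => f (w t) u v))).
move=> u; exact: (prod_sum (fun t v => f (w t) (u t) v)).
Qed.

Lemma fact2 (f : W -> V -> R) :
  rsum (fun w : {ffun 'I_n -> W} => rsum (fun v : {ffun 'I_n -> V} =>
    rprod (fun t => f (w t) (v t))))
  = (rsum (fun w => rsum (fun v => f w v))) ^ n.
Proof.
rewrite -rprod_const_ord.
rewrite (rsum_ext (g := fun w : {ffun 'I_n -> W} => rprod (fun t => rsum (fun v => f (w t) v)))).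
  exact: (prod_sum (fun _ w => rsum (fun v => f w v))).
move=> w; exact: (prod_sum (fun t v => f (w t) v)).
Qed.

Lemma pWUV_ge0 w u v : 0 <= pWUV PhiW PhiUW PhiVWU w u v.
Proof.
rewrite /pWUV; apply: Rmult_le_pos; [apply: Rmult_le_pos|]; [exact: PhiW_ge0|exact: PhiUW_ge0|exact: PhiVWU_ge0].
Qed.

Lemma PhiV_ge_pWUV w u v : pWUV PhiW PhiUW PhiVWU w u v <= PhiV PhiW PhiUW PhiVWU v.
Proof.
rewrite /PhiV.
apply: Rle_trans (@rsum_term _ (fun u => pWUV PhiW PhiUW PhiVWU w u v) u _) _.
  by move=> ?; apply: pWUV_ge0.
apply: (@rsum_term _ (fun w => rsum (fun u => pWUV PhiW PhiUW PhiVWU w u v)) w).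
move=> ?; apply: rsum_ge0 => ?; exact: pWUV_ge0.
Qed.

Lemma pos3 a b c : 0 <= a -> 0 <= b -> 0 <= c -> 0 < a * b * c -> 0 < a /\ 0 < b /\ 0 < c.
Proof.
move=> ha hb hc h.
have : a <> 0 by move=> e; rewrite e in h; lra.
have : b <> 0 by move=> e; rewrite e in h; lra.
have : c <> 0 by move=> e; rewrite e in h; lra.
lra.
Qed.

Lemma cherA (c b lam : R) : 0 < c -> 0 < lam ->
  rsum (fun v : {ffun 'I_n -> V} => rsum (fun w : {ffun 'I_n -> W} => rsum (fun u : {ffun 'I_n -> U} =>
    pW w * pU w u * Gam w u v *
    (if Rlt_dec (c * exp (INR n * b) * Qv v) (Gam w u v) then 1 else 0))))
  <= exp (- lam * ln c) * (rsum (fun w => rsum (fun u => rsum (fun v =>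
       pWUV PhiW PhiUW PhiVWU w u v *
       exp (lam * (ln (PhiVWU w u v) - ln (PhiV PhiW PhiUW PhiVWU v) - b)))))) ^ n.
Proof.
move=> hc hl.
rewrite -fact3 -!rsum_scal rsum_swap; apply: rsum_le => w.
rewrite -!rsum_scal rsum_swap; apply: rsum_le => u.
rewrite -!rsum_scal; apply: rsum_le => v.
have -> : pW w * pU w u * Gam w u v = rprod (fun t => pWUV PhiW PhiUW PhiVWU (w t) (u t) (v t)).
  by rewrite /pW /pU /Gam -!rprod_mult.
apply: (chernoff_point (p := fun t => pWUV PhiW PhiUW PhiVWU (w t) (u t) (v t))
   (a := fun t => PhiVWU (w t) (u t) (v t)) (d := fun t => PhiV PhiW PhiUW PhiVWU (v t))) => //.
  by move=> t; apply: pWUV_ge0.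
move=> t hp; split.
  have := pos3 (PhiW_ge0 (w t)) (PhiUW_ge0 (w t) (u t)) (PhiVWU_ge0 (w t) (u t) (v t)) hp; tauto.
apply: Rlt_le_trans hp _; exact: PhiV_ge_pWUV.
Qed.

Lemma cherB (c b lam : R) : 0 < c -> 0 < lam ->
  rsum (fun v : {ffun 'I_n -> V} => rsum (fun w : {ffun 'I_n -> W} => rsum (fun u : {ffun 'I_n -> U} =>
    pW w * pU w u * Gam w u v *
    (if Rlt_dec (c * exp (INR n * b) * Qv v) (Gam w u v * pW w) then 1 else 0))))
  <= exp (- lam * ln c) * (rsum (fun w => rsum (fun u => rsum (fun v =>
       pWUV PhiW PhiUW PhiVWU w u v *
       exp (lam * (ln (PhiVWU w u v * PhiW w) - ln (PhiV PhiW PhiUW PhiVWU v) - b)))))) ^ n.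
Proof.
move=> hc hl.
rewrite -fact3 -!rsum_scal rsum_swap; apply: rsum_le => w.
rewrite -!rsum_scal rsum_swap; apply: rsum_le => u.
rewrite -!rsum_scal; apply: rsum_le => v.
have -> : pW w * pU w u * Gam w u v = rprod (fun t => pWUV PhiW PhiUW PhiVWU (w t) (u t) (v t)).
  by rewrite /pW /pU /Gam -!rprod_mult.
have -> : Gam w u v * pW w = rprod (fun t => PhiVWU (w t) (u t) (v t) * PhiW (w t)).
  by rewrite /pW /Gam -!rprod_mult.
apply: (chernoff_point (p := fun t => pWUV PhiW PhiUW PhiVWU (w t) (u t) (v t))
   (a := fun t => PhiVWU (w t) (u t) (v t) * PhiW (w t)) (d := fun t => PhiV PhiW PhiUW PhiVWU (v t))) => //.
  by move=> t; apply: pWUV_ge0.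
move=> t hp; split.
  have := pos3 (PhiW_ge0 (w t)) (PhiUW_ge0 (w t) (u t)) (PhiVWU_ge0 (w t) (u t) (v t)) hp.
  move=> [h1 [h2 h3]]; exact: Rmult_lt_0_compat.
apply: Rlt_le_trans hp _; exact: PhiV_ge_pWUV.
Qed.

Lemma cherC (c b lam : R) : 0 < c -> 0 < lam ->
  rsum (fun v : {ffun 'I_n -> V} => rsum (fun w : {ffun 'I_n -> W} =>
    pW w * GamW w v *
    (if Rlt_dec (c * exp (INR n * b) * Qv v) (GamW w v) then 1 else 0)))
  <= exp (- lam * ln c) * (rsum (fun w => rsum (fun v =>
       PhiW w * cW w v *
       exp (lam * (ln (cW w v) - ln (PhiV PhiW PhiUW PhiVWU v) - b))))) ^ n.
Proof.
move=> hc hl.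
rewrite -fact2 -!rsum_scal rsum_swap; apply: rsum_le => w.
rewrite -!rsum_scal; apply: rsum_le => v.
have -> : pW w * GamW w v = rprod (fun t => PhiW (w t) * cW (w t) (v t)).
  by rewrite GamW_prod /pW -!rprod_mult.
rewrite GamW_prod.
apply: (chernoff_point (p := fun t => PhiW (w t) * cW (w t) (v t))
   (a := fun t => cW (w t) (v t)) (d := fun t => PhiV PhiW PhiUW PhiVWU (v t))) => //.
  by move=> t; apply: Rmult_le_pos; [exact: PhiW_ge0|exact: cW_ge0].
move=> t hp.
have h0 := PhiW_ge0 (w t); have h1 := cW_ge0 (w t) (v t).
split.
  case: h1 => // e; rewrite -e in hp; lra.
apply: Rlt_le_trans hp _; rewrite PhiV_cW.
apply: (@rsum_term _ (fun w => PhiW w * cW w (v t)) (w t)).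
by move=> x; apply: Rmult_le_pos; [exact: PhiW_ge0|exact: cW_ge0].
Qed.

Lemma ind_ge_bound (G T M c e q K : R) : 0 < K -> 0 <= q -> 0 <= G -> c * e <= M / K ->
  M * q < T * K -> G <= G * (if Rlt_dec (c * e * q) T then 1 else 0).
Proof.
move=> hK hq hG hce h.
case: Rlt_dec => h' /=; first lra.
exfalso; apply: h'.
have : M * q / K < T.
  apply: (Rmult_lt_reg_r K) => //; rewrite (_ : M * q / K * K = M * q) //; field; lra.
have : c * e * q <= M / K * q by apply: Rmult_le_compat_r.
have -> : M / K * q = M * q / K by field; lra.
lra.
Qed.

Lemma badA M1 M2 K c1 b1 c2 b2 : 0 < K ->
  c1 * exp (INR n * b1) <= INR (M1 * M2) / K -> c2 * exp (INR n * b2) <= INR M2 / K ->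
  rsum (fun v => rsum (fun w => pW w * mB M1 M2 K w v)) <=
  rsum (fun v : {ffun 'I_n -> V} => rsum (fun w : {ffun 'I_n -> W} => rsum (fun u : {ffun 'I_n -> U} =>
    pW w * pU w u * Gam w u v *
    (if Rlt_dec (c1 * exp (INR n * b1) * Qv v) (Gam w u v) then 1 else 0)))) +
  rsum (fun v : {ffun 'I_n -> V} => rsum (fun w : {ffun 'I_n -> W} => rsum (fun u : {ffun 'I_n -> U} =>
    pW w * pU w u * Gam w u v *
    (if Rlt_dec (c2 * exp (INR n * b2) * Qv v) (Gam w u v * pW w) then 1 else 0)))).
Proof.
move=> hK e1 e2.
rewrite -rsum_plus; apply: rsum_le => v; rewrite -rsum_plus; apply: rsum_le => w.
rewrite -rsum_plus /mB -rsum_scal; apply: rsum_le => u.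
have hp : 0 <= pW w * pU w u by apply: Rmult_le_pos; [exact: pW_ge0|exact: pU_ge0].
set i1 := (if Rlt_dec (c1 * exp (INR n * b1) * Qv v) (Gam w u v) then 1 else 0).
set i2 := (if Rlt_dec (c2 * exp (INR n * b2) * Qv v) (Gam w u v * pW w) then 1 else 0).
suff key : Bd M1 M2 K w u v <= Gam w u v * i1 + Gam w u v * i2.
  apply: Rle_trans (_ : _ <= (pW w * pU w u) * (Gam w u v * i1 + Gam w u v * i2)) _.
    rewrite -Rmult_assoc; exact: Rmult_le_compat_l.
  right; ring.
have hG := Gam_ge0 w u v; have hq := Qv_ge0 v.
have j1 : 0 <= i1 by rewrite /i1; case: Rlt_dec => _ /=; lra.
have j2 : 0 <= i2 by rewrite /i2; case: Rlt_dec => _ /=; lra.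
have k1 : 0 <= Gam w u v * i1 by apply: Rmult_le_pos.
have k2 : 0 <= Gam w u v * i2 by apply: Rmult_le_pos.
rewrite /Bd /Gd.
case: (Rle_dec (Gam w u v * K) _) => g1 /=.
  case: (Rle_dec (Gam w u v * pW w * K) _) => g2 /=.
    rewrite Rminus_diag; lra.
  rewrite Rminus_0_r.
  have hGp : 0 <= Gam w u v * pW w by apply: Rmult_le_pos => //; exact: pW_ge0.
  have := ind_ge_bound hK hq hGp e2 (Rnot_le_lt _ _ g2); rewrite -/i2.
  have hM := pos_INR M2.
  have hpos : 0 < Gam w u v * pW w * K.
    apply: Rle_lt_trans (Rnot_le_lt _ _ g2); exact: Rmult_le_pos.
  have hpos' : 0 < Gam w u v * pW w.
    case: hGp => // e; rewrite -e Rmult_0_l in hpos; lra.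
  rewrite /i2; case: Rlt_dec => h /=; last lra.
  move=> _; rewrite Rmult_1_r; lra.
rewrite Rminus_0_r.
have := ind_ge_bound hK hq hG e1 (Rnot_le_lt _ _ g1); rewrite -/i1.
move=> h; lra.
Qed.

Lemma badC M1 K c b : 0 < K -> c * exp (INR n * b) <= INR M1 / K ->
  rsum (fun v => mB1 M1 K v) <=
  rsum (fun v : {ffun 'I_n -> V} => rsum (fun w : {ffun 'I_n -> W} =>
    pW w * GamW w v *
    (if Rlt_dec (c * exp (INR n * b) * Qv v) (GamW w v) then 1 else 0))).
Proof.
move=> hK e.
apply: rsum_le => v; apply: rsum_le => w.
rewrite Rmult_assoc; apply: Rmult_le_compat_l; first exact: pW_ge0.
rewrite /B1d /G1; have hq := Qv_ge0 v; have hG := GamW_ge0 w v.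
case: Rle_dec => g /=.
  rewrite Rminus_diag; apply: Rmult_le_pos => //; case: Rlt_dec => _ /=; lra.
rewrite Rminus_0_r; exact: (ind_ge_bound hK hq hG e (Rnot_le_lt _ _ g)).
Qed.

End Seq.

Lemma cb_size_ge n Rt : exp (INR n * Rt * ln 2) / 2 <= INR (cb_size n Rt) /\ 1 <= INR (cb_size n Rt).
Proof.
rewrite /cb_size.
set x := Rpower 2 (INR n * Rt).
have hx : x = exp (INR n * Rt * ln 2) by [].
rewrite -hx.
set z := Int_part x.
have [hz1 hz2] := base_Int_part x; rewrite -/z in hz1 hz2.
have hm1 : 1 <= INR (Nat.max 1 (Z.to_nat z)).
  apply: (Rle_trans _ (INR 1)); first by rewrite /=; lra.
  apply: le_INR; exact: Nat.le_max_l.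
split => //.
case: (Rlt_le_dec x 2) => h2; first lra.
have hz0 : (0 <= z)%Z.
  apply: le_IZR; lra.
have : IZR z <= INR (Nat.max 1 (Z.to_nat z)).
  rewrite -(Z2Nat.id z hz0) -INR_IZR_INZ Nat2Z.id.
  apply: le_INR; exact: Nat.le_max_r.
lra.
Qed.

Lemma ln2_pos : 0 < ln 2.
Proof. rewrite -ln_1; apply: ln_increasing; lra. Qed.

Lemma xlogr_eq x y a : 0 < x -> 0 < y -> x / y = a -> 0 < a ->
  ln 2 * xlogr x y = x * ln a.
Proof.
move=> hx hy e ha; rewrite /xlogr; destruct (Req_EM_T x 0) as [e0|ne0]; first lra.
rewrite /log2 e; have := ln2_pos; move=> h /=; field; lra.
Qed.

Section Letter.
Variables (W U V : finType) (PhiW : W -> R) (PhiUW : W -> U -> R)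
  (PhiVWU : W -> U -> V -> R).
Hypothesis hW : is_pmf PhiW.
Hypothesis hUW : forall w, is_pmf (PhiUW w).
Hypothesis hVWU : forall w u, is_pmf (PhiVWU w u).
Local Notation pWUV := (pWUV PhiW PhiUW PhiVWU).
Local Notation PhiV := (PhiV PhiW PhiUW PhiVWU).

Lemma pos_of_pWUV w u v : 0 < pWUV w u v ->
  0 < PhiW w /\ 0 < PhiUW w u /\ 0 < PhiVWU w u v /\ 0 < PhiV v.
Proof.
move=> h.
have := pos3 (PhiW_ge0 hW w) (PhiUW_ge0 hUW w u) (PhiVWU_ge0 hVWU w u v) h.
move=> [h1 [h2 h3]]; do 3 (split => //).
apply: Rlt_le_trans h _; exact: PhiV_ge_pWUV.
Qed.

Lemma L1 : rsum (fun w => rsum (fun u => rsum (fun v =>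
   pWUV w u v * (ln (PhiVWU w u v) - ln (PhiV v))))) = ln 2 * mi_WU_V PhiW PhiUW PhiVWU.
Proof.
rewrite /mi_WU_V -rsum_scal; apply: rsum_ext => w; rewrite -rsum_scal; apply: rsum_ext => u.
rewrite -rsum_scal; apply: rsum_ext => v.
have h0 := pWUV_ge0 hW hUW hVWU w u v.
case: h0 => hp; last first.
  by rewrite -hp /xlogr; destruct (Req_EM_T _ 0) as [e1|ne] => /=; [ring|lra].
have [h1 [h2 [h3 h4]]] := pos_of_pWUV hp.
rewrite (@xlogr_eq _ _ (PhiVWU w u v / PhiV v)) //.
- rewrite /Rdiv ln_mult; [rewrite ln_Rinv //; ring | done | exact: Rinv_0_lt_compat].
- rewrite /pWU; apply: Rmult_lt_0_compat => //; exact: Rmult_lt_0_compat.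
- rewrite /pWU /pWUV; field; lra.
- exact: Rdiv_lt_0_compat.
Qed.

Lemma entW_eq : rsum (fun w => PhiW w * ln (PhiW w)) = - ln 2 * entW PhiW.
Proof.
rewrite /entW; have := ln2_pos => hl.
have -> : - ln 2 * - rsum (fun w => xlogr (PhiW w) 1) = ln 2 * rsum (fun w => xlogr (PhiW w) 1) by ring.
rewrite -rsum_scal; apply: rsum_ext => w.
have := PhiW_ge0 hW w; case => hp.
  rewrite (@xlogr_eq _ _ (PhiW w)) //; [lra|field].
by rewrite -hp /xlogr; destruct (Req_EM_T _ 0) as [e1|ne] => /=; [ring|lra].
Qed.

Lemma L2 : rsum (fun w => rsum (fun u => rsum (fun v =>
   pWUV w u v * (ln (PhiVWU w u v * PhiW w) - ln (PhiV v))))) =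
   ln 2 * (mi_WU_V PhiW PhiUW PhiVWU - entW PhiW).
Proof.
transitivity (rsum (fun w => rsum (fun u => rsum (fun v =>
   pWUV w u v * (ln (PhiVWU w u v) - ln (PhiV v))))) + rsum (fun w => PhiW w * ln (PhiW w))).
  rewrite -rsum_plus; apply: rsum_ext => w.
  have -> : PhiW w * ln (PhiW w) = rsum (fun u => rsum (fun v => pWUV w u v * ln (PhiW w))).
    rewrite (rsum_ext (g := fun u => (PhiW w * ln (PhiW w) * PhiUW w u))); last first.
      move=> u; rewrite (rsum_ext (g := fun v => (PhiW w * ln (PhiW w) * PhiUW w u) * PhiVWU w u v)).
        by rewrite rsum_scal; case: (hVWU w u) => _ ->; ring.
      by move=> v; rewrite /pWUV; ring.
    by rewrite rsum_scal; case: (hUW w) => _ ->; ring.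
  rewrite -rsum_plus; apply: rsum_ext => u; rewrite -rsum_plus; apply: rsum_ext => v.
  have h0 := pWUV_ge0 hW hUW hVWU w u v.
  case: h0 => hp; last by rewrite -hp; ring.
  have [h1 [h2 [h3 h4]]] := pos_of_pWUV hp.
  rewrite ln_mult //; ring.
rewrite L1 entW_eq; ring.
Qed.

Lemma L3 : rsum (fun w => rsum (fun v =>
   PhiW w * cW PhiUW PhiVWU w v * (ln (cW PhiUW PhiVWU w v) - ln (PhiV v)))) =
   ln 2 * mi_W_V PhiW PhiUW PhiVWU.
Proof.
rewrite /mi_W_V -rsum_scal; apply: rsum_ext => w; rewrite -rsum_scal; apply: rsum_ext => v.
have epw : pWV PhiW PhiUW PhiVWU w v = PhiW w * cW PhiUW PhiVWU w v.
  rewrite /pWV /cW -rsum_scal; apply: rsum_ext => u; rewrite /pWUV; ring.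
rewrite epw.
have h0 : 0 <= PhiW w * cW PhiUW PhiVWU w v.
  apply: Rmult_le_pos; [exact: PhiW_ge0|exact: cW_ge0].
case: h0 => hp; last first.
  by rewrite -hp /xlogr; destruct (Req_EM_T _ 0) as [e1|ne] => /=; [ring|lra].
have hw : 0 < PhiW w.
  case: (PhiW_ge0 hW w) => // e; rewrite -e in hp; lra.
have hc : 0 < cW PhiUW PhiVWU w v.
  case: (cW_ge0 hUW hVWU w v) => // e; rewrite -e in hp; lra.
have hv : 0 < PhiV v.
  apply: Rlt_le_trans hp _; rewrite PhiV_cW.
  apply: (@rsum_term _ (fun w => PhiW w * cW PhiUW PhiVWU w v) w).
  by move=> x; apply: Rmult_le_pos; [exact: PhiW_ge0|exact: cW_ge0].
rewrite (@xlogr_eq _ _ (cW PhiUW PhiVWU w v / PhiV v)) //.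
- rewrite /Rdiv ln_mult; [rewrite ln_Rinv //; ring | done | exact: Rinv_0_lt_compat].
- exact: Rmult_lt_0_compat.
- field; lra.
- exact: Rdiv_lt_0_compat.
Qed.

End Letter.

Lemma nest2 (X Y : finType) (F : X -> Y -> R) :
  rsum (fun x : X * Y => F x.1 x.2) = rsum (fun x => rsum (fun y => F x y)).
Proof. rewrite /rsum pair_big; done. Qed.

Lemma nest3 (X Y Z : finType) (F : X -> Y -> Z -> R) :
  rsum (fun x : X * (Y * Z) => F x.1 x.2.1 x.2.2) = rsum (fun x => rsum (fun y => rsum (fun z => F x y z))).
Proof.
rewrite (nest2 (fun x (yz : Y * Z) => F x yz.1 yz.2)); apply: rsum_ext => x.
exact: (nest2 (fun y z => F x y z)).
Qed.

Lemma pow_exp_bound rho : 0 <= rho < 1 -> exists c, 0 < c /\ forall n, rho ^ n <= exp (- c * INR n).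
Proof.
move=> [h0 h1].
set r := Rmax rho (1/2).
have hr0 : 0 < r by apply: Rlt_le_trans (Rmax_r _ _); lra.
have hr1 : r < 1 by apply: Rmax_lub_lt; lra.
exists (- ln r); split.
  have : ln r < 0 by rewrite -ln_1; apply: ln_increasing.
  lra.
move=> n.
apply: Rle_trans (pow_incr rho r n _) _.
  split => //; exact: Rmax_l.
rewrite -Rpower_pow // /Rpower; right; congr exp; ring.
Qed.

Lemma exp_mono_c c c' n : c <= c' -> exp (- c' * INR n) <= exp (- c * INR n).
Proof.
move=> h; have := pos_INR n => hn.
case: (Req_dec (- c' * INR n) (- c * INR n)) => e; first by rewrite e; lra.
left; apply: exp_increasing; nra.
Qed.

Lemma expected_tv_ge0 (W U V : finType) (PhiW : W -> R) (PhiUW : W -> U -> R)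
  (PhiVWU : W -> U -> V -> R) (hW : is_pmf PhiW) (hUW : forall w, is_pmf (PhiUW w)) n M1 M2 :
  0 <= expected_tv PhiW PhiUW PhiVWU n M1 M2.
Proof.
apply: rsum_ge0 => B1; apply: rsum_ge0 => B2.
apply: Rmult_le_pos; [apply: Rmult_le_pos|].
- apply: rprod_ge0 => j; apply: rprod_ge0 => t; exact: PhiW_ge0.
- apply: rprod_ge0 => w; apply: rprod_ge0 => k; apply: rprod_ge0 => t; exact: PhiUW_ge0.
- apply: Rmult_le_pos; first lra; apply: rsum_ge0 => v; exact: Rabs_pos.
Qed.

Lemma cv_from_bound (E : nat -> R) c C : 0 < c -> 0 < C -> (forall n, 0 <= E n) ->
  (forall n, E n <= C * exp (- c * INR n)) -> Un_cv E 0.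
Proof.
move=> hc hC h0 hb eps he.
have he' : 0 < eps * c / C by apply: Rdiv_lt_0_compat => //; nra.
have [N [hN hN0]] := archimed_cor1 _ he'.
exists N => n hn.
rewrite /R_dist Rminus_0_r Rabs_pos_eq //.
have hNn : INR N <= INR n by apply: le_INR.
have hN' : 0 < INR N by apply: lt_0_INR.
have hex : 1 + c * INR n <= exp (c * INR n) by apply: exp_ineq1_le.
have e1 : exp (- c * INR n) * exp (c * INR n) = 1.
  by rewrite -exp_plus (_ : - c * INR n + c * INR n = 0); [exact: exp_0|ring].
have hpos := exp_pos (- c * INR n).
apply: Rle_lt_trans (hb n) _.
have h2 : exp (- c * INR n) * (c * INR N) <= 1.
  have : c * INR N <= c * INR n by apply: Rmult_le_compat_l; lra.
  nra.
have h3 : exp (- c * INR n) <= / (c * INR N).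
  apply: (Rmult_le_reg_r (c * INR N)); first nra.
  rewrite Rinv_l; [lra|nra].
have h4 : C * / (c * INR N) < eps.
  have -> : C * / (c * INR N) = (C / c) * / INR N by field; lra.
  have -> : eps = (C / c) * (eps * c / C) by field; lra.
  apply: Rmult_lt_compat_l => //; exact: Rdiv_lt_0_compat.
apply: Rle_lt_trans h4; apply: Rmult_le_compat_l => //; lra.
Qed.

Section Final.
Variables (W U V : finType) (PhiW : W -> R) (PhiUW : W -> U -> R)
  (PhiVWU : W -> U -> V -> R).
Hypothesis hW : is_pmf PhiW.
Hypothesis hUW : forall w, is_pmf (PhiUW w).
Hypothesis hVWU : forall w u, is_pmf (PhiVWU w u).
Local Notation pWUV := (pWUV PhiW PhiUW PhiVWU).
Local Notation PhiV := (PhiV PhiW PhiUW PhiVWU).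
Local Notation cW := (cW PhiUW PhiVWU).

Lemma pWUV_sum3 : rsum (fun w => rsum (fun u => rsum (fun v => pWUV w u v))) = 1.
Proof.
case: hW => _ <-; apply: rsum_ext => w.
transitivity (rsum (fun u => PhiW w * PhiUW w u)).
  apply: rsum_ext => u; case: (hVWU w u) => _ h.
  rewrite -[RHS]Rmult_1_r -h -rsum_scal; apply: rsum_ext => v; rewrite /pWUV; ring.
rewrite rsum_scal; case: (hUW w) => _ ->; ring.
Qed.

Lemma pWcW_sum2 : rsum (fun w => rsum (fun v => PhiW w * cW w v)) = 1.
Proof.
case: hW => _ <-; apply: rsum_ext => w.
rewrite rsum_scal /cW rsum_swap.
rewrite (rsum_ext (g := fun u => PhiUW w u)); first by case: (hUW w) => _ ->; ring.
move=> u; rewrite rsum_scal; case: (hVWU w u) => _ ->; ring.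
Qed.

Lemma rhoA b : ln 2 * mi_WU_V PhiW PhiUW PhiVWU < b ->
  exists lam, 0 < lam /\ 0 <= rsum (fun w => rsum (fun u => rsum (fun v =>
       pWUV w u v * exp (lam * (ln (PhiVWU w u v) - ln (PhiV v) - b))))) < 1.
Proof.
move=> hb.
have hp0 : forall x : W * (U * V), 0 <= pWUV x.1 x.2.1 x.2.2 by move=> x; apply: pWUV_ge0.
have hp1 : rsum (fun x : W * (U * V) => pWUV x.1 x.2.1 x.2.2) = 1.
  by rewrite (nest3 (fun w u v => pWUV w u v)); exact: pWUV_sum3.
have hm : rsum (fun x : W * (U * V) => pWUV x.1 x.2.1 x.2.2 *
     (ln (PhiVWU x.1 x.2.1 x.2.2) - ln (PhiV x.2.2) - b)) < 0.
  rewrite (rsum_ext (g := fun x : W * (U * V) => pWUV x.1 x.2.1 x.2.2 *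
     (ln (PhiVWU x.1 x.2.1 x.2.2) - ln (PhiV x.2.2)) + (- b) * pWUV x.1 x.2.1 x.2.2)); last first.
    by move=> x; ring.
  rewrite rsum_plus rsum_scal hp1.
  rewrite (nest3 (fun w u v => pWUV w u v * (ln (PhiVWU w u v) - ln (PhiV v)))) L1 //; lra.
have [lam [hl hr]] := chernoff_rho hp0 hp1 hm.
exists lam; split => //.
rewrite -(nest3 (fun w u v => pWUV w u v * exp (lam * (ln (PhiVWU w u v) - ln (PhiV v) - b)))).
split => //; apply: rsum_ge0 => x; apply: Rmult_le_pos => //; exact: Rlt_le (exp_pos _).
Qed.

Lemma rhoB b : ln 2 * (mi_WU_V PhiW PhiUW PhiVWU - entW PhiW) < b ->
  exists lam, 0 < lam /\ 0 <= rsum (fun w => rsum (fun u => rsum (fun v =>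
       pWUV w u v * exp (lam * (ln (PhiVWU w u v * PhiW w) - ln (PhiV v) - b))))) < 1.
Proof.
move=> hb.
have hp0 : forall x : W * (U * V), 0 <= pWUV x.1 x.2.1 x.2.2 by move=> x; apply: pWUV_ge0.
have hp1 : rsum (fun x : W * (U * V) => pWUV x.1 x.2.1 x.2.2) = 1.
  by rewrite (nest3 (fun w u v => pWUV w u v)); exact: pWUV_sum3.
have hm : rsum (fun x : W * (U * V) => pWUV x.1 x.2.1 x.2.2 *
     (ln (PhiVWU x.1 x.2.1 x.2.2 * PhiW x.1) - ln (PhiV x.2.2) - b)) < 0.
  rewrite (rsum_ext (g := fun x : W * (U * V) => pWUV x.1 x.2.1 x.2.2 *
     (ln (PhiVWU x.1 x.2.1 x.2.2 * PhiW x.1) - ln (PhiV x.2.2)) + (- b) * pWUV x.1 x.2.1 x.2.2)); last first.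
    by move=> x; ring.
  rewrite rsum_plus rsum_scal hp1.
  rewrite (nest3 (fun w u v => pWUV w u v * (ln (PhiVWU w u v * PhiW w) - ln (PhiV v)))) L2 //; lra.
have [lam [hl hr]] := chernoff_rho hp0 hp1 hm.
exists lam; split => //.
rewrite -(nest3 (fun w u v => pWUV w u v * exp (lam * (ln (PhiVWU w u v * PhiW w) - ln (PhiV v) - b)))).
split => //; apply: rsum_ge0 => x; apply: Rmult_le_pos => //; exact: Rlt_le (exp_pos _).
Qed.

Lemma rhoC b : ln 2 * mi_W_V PhiW PhiUW PhiVWU < b ->
  exists lam, 0 < lam /\ 0 <= rsum (fun w => rsum (fun v =>
       PhiW w * cW w v * exp (lam * (ln (cW w v) - ln (PhiV v) - b)))) < 1.
Proof.
move=> hb.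
have hp0 : forall x : W * V, 0 <= PhiW x.1 * cW x.1 x.2.
  by move=> x; apply: Rmult_le_pos; [exact: PhiW_ge0|exact: cW_ge0].
have hp1 : rsum (fun x : W * V => PhiW x.1 * cW x.1 x.2) = 1.
  by rewrite (nest2 (fun w v => PhiW w * cW w v)); exact: pWcW_sum2.
have hm : rsum (fun x : W * V => PhiW x.1 * cW x.1 x.2 *
     (ln (cW x.1 x.2) - ln (PhiV x.2) - b)) < 0.
  rewrite (rsum_ext (g := fun x : W * V => PhiW x.1 * cW x.1 x.2 *
     (ln (cW x.1 x.2) - ln (PhiV x.2)) + (- b) * (PhiW x.1 * cW x.1 x.2))); last first.
    by move=> x; ring.
  rewrite rsum_plus rsum_scal hp1.
  rewrite (nest2 (fun w v => PhiW w * cW w v * (ln (cW w v) - ln (PhiV v)))) L3 //; lra.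
have [lam [hl hr]] := chernoff_rho hp0 hp1 hm.
exists lam; split => //.
rewrite -(nest2 (fun w v => PhiW w * cW w v * exp (lam * (ln (cW w v) - ln (PhiV v) - b)))).
split => //; apply: rsum_ge0 => x; apply: Rmult_le_pos => //; exact: Rlt_le (exp_pos _).
Qed.

End Final.

Lemma cb_pos n Rt : (0 < cb_size n Rt)%nat.
Proof.
have [_ h] := cb_size_ge n Rt.
apply/ltP; apply: INR_lt; rewrite /=; lra.
Qed.

Unset Implicit Arguments.
Theorem mainTheorem16 (W U V : finType) (PhiW : W -> R) (PhiUW : W -> U -> R)
  (PhiVWU : W -> U -> V -> R)
  (hW : is_pmf PhiW)
  (hUW : forall w, is_pmf (PhiUW w))
  (hVWU : forall w u, is_pmf (PhiVWU w u))
  (R1 R2 : R)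
  (h1 : R1 > mi_W_V PhiW PhiUW PhiVWU)
  (h2 : R2 > mi_WU_V PhiW PhiUW PhiVWU - entW PhiW)
  (h3 : R1 + R2 > mi_WU_V PhiW PhiUW PhiVWU) :
  let E := fun n : nat =>
    expected_tv PhiW PhiUW PhiVWU n (cb_size n R1) (cb_size n R2) in
  Un_cv E 0 /\
  exists c C : R, 0 < c /\ forall n : nat, E n <= C * exp (- c * INR n).
Proof.
move=> E.
have hl := ln2_pos.
set I1 := mi_W_V PhiW PhiUW PhiVWU in h1.
set I2 := mi_WU_V PhiW PhiUW PhiVWU in h2 h3.
set H := entW PhiW in h2.
set d1 := (R1 - I1) * ln 2.
set d2 := (R2 - (I2 - H)) * ln 2.
set d3 := (R1 + R2 - I2) * ln 2.
have hd1 : 0 < d1 by apply: Rmult_lt_0_compat; lra.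
have hd2 : 0 < d2 by apply: Rmult_lt_0_compat; lra.
have hd3 : 0 < d3 by apply: Rmult_lt_0_compat; lra.
set g := Rmin d1 (Rmin d2 d3) / 2.
have hg : 0 < g.
  rewrite /g; apply: Rdiv_lt_0_compat; last lra.
  apply: Rmin_pos => //; exact: Rmin_pos.
have hg1 : g < d1.
  have := Rmin_l d1 (Rmin d2 d3); rewrite /g; lra.
have hg2 : g < d2.
  have := Rmin_r d1 (Rmin d2 d3); have := Rmin_l d2 d3; rewrite /g.
  have := Rmin_pos _ _ hd1 (Rmin_pos _ _ hd2 hd3); lra.
have hg3 : g < d3.
  have := Rmin_r d1 (Rmin d2 d3); have := Rmin_r d2 d3; rewrite /g.
  have := Rmin_pos _ _ hd1 (Rmin_pos _ _ hd2 hd3); lra.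
set bA := (R1 + R2) * ln 2 - g.
set bB := R2 * ln 2 - g.
set bC := R1 * ln 2 - g.
have [lA [hlA [hrA0 hrA1]]] := rhoA hW hUW hVWU (b := bA) ltac:(rewrite -/I2 /bA; rewrite /d3 in hg3; lra).
have [lB [hlB [hrB0 hrB1]]] := rhoB hW hUW hVWU (b := bB) ltac:(rewrite -/I2 -/H /bB; rewrite /d2 in hg2; lra).
have [lC [hlC [hrC0 hrC1]]] := rhoC hW hUW hVWU (b := bC) ltac:(rewrite -/I1 /bC; rewrite /d1 in hg1; lra).
set rA := rsum _ in hrA0 hrA1.
set rB := rsum _ in hrB0 hrB1.
set rC := rsum _ in hrC0 hrC1.
have [cA [hcA bndA]] := pow_exp_bound (conj hrA0 hrA1).
have [cB [hcB bndB]] := pow_exp_bound (conj hrB0 hrB1).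
have [cC [hcC bndC]] := pow_exp_bound (conj hrC0 hrC1).
set kA := exp (- lA * ln (/ 4)).
set kB := exp (- lB * ln (/ 2)).
set kC := exp (- lC * ln (/ 2)).
have hkA : 0 < kA := exp_pos _.
have hkB : 0 < kB := exp_pos _.
have hkC : 0 < kC := exp_pos _.
set c := Rmin (g / 2) (Rmin cA (Rmin cB cC)).
have hc : 0 < c.
  apply: Rmin_pos; first lra; apply: Rmin_pos => //; exact: Rmin_pos.
have cg : c <= g / 2 by apply: Rmin_l.
have m1 := Rmin_r (g/2) (Rmin cA (Rmin cB cC)); rewrite -/c in m1.
have m2 := Rmin_r cA (Rmin cB cC); have m3 := Rmin_l cA (Rmin cB cC).
have m4 := Rmin_l cB cC; have m5 := Rmin_r cB cC.
have cA' : c <= cA by lra.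
have cB' : c <= cB by lra.
have cC' : c <= cC by lra.
set C := / 2 * (2 + 1 + 2 * kA + 2 * kB + 2 * kC).
have hC : 0 < C by rewrite /C; lra.
suff bnd : forall n, E n <= C * exp (- c * INR n).
  split; last by exists c, C.
  apply: (cv_from_bound hc hC) => // n.
  exact: expected_tv_ge0.
move=> n.
rewrite /E.
set M1 := cb_size n R1; set M2 := cb_size n R2.
have [a1 _] := cb_size_ge n R1; have [a2 _] := cb_size_ge n R2.
rewrite -/M1 in a1; rewrite -/M2 in a2.
set A1 := exp (INR n * R1 * ln 2) in a1.
set A2 := exp (INR n * R2 * ln 2) in a2.
have hA1 : 0 < A1 := exp_pos _.
have hA2 : 0 < A2 := exp_pos _.
set K := exp (INR n * g).
have hK : 0 < K := exp_pos _.
have T := exp_tv_bound hW hUW hVWU n (cb_pos n R1) (cb_pos n R2) hK.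
rewrite -/M1 -/M2 in T.
have eK : forall x, exp (x - INR n * g) = exp x / K.
  move=> x; rewrite /K /Rminus exp_plus exp_Ropp; done.
have e1 : / 4 * exp (INR n * bA) <= INR (M1 * M2) / K.
  have -> : INR n * bA = (INR n * R1 * ln 2 + INR n * R2 * ln 2) - INR n * g by rewrite /bA; ring.
  rewrite eK exp_plus -/A1 -/A2 mult_INR.
  have -> : / 4 * (A1 * A2 / K) = (A1 / 2) * (A2 / 2) / K by field; lra.
  apply: Rmult_le_compat_r; first by apply: Rlt_le; apply: Rinv_0_lt_compat.
  apply: Rmult_le_compat => //; lra.
have e2 : / 2 * exp (INR n * bB) <= INR M2 / K.
  have -> : INR n * bB = INR n * R2 * ln 2 - INR n * g by rewrite /bB; ring.
  rewrite eK -/A2.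
  have -> : / 2 * (A2 / K) = (A2 / 2) / K by field; lra.
  apply: Rmult_le_compat_r => //; apply: Rlt_le; apply: Rinv_0_lt_compat => //.
have e3 : / 2 * exp (INR n * bC) <= INR M1 / K.
  have -> : INR n * bC = INR n * R1 * ln 2 - INR n * g by rewrite /bC; ring.
  rewrite eK -/A1.
  have -> : / 2 * (A1 / K) = (A1 / 2) / K by field; lra.
  apply: Rmult_le_compat_r => //; apply: Rlt_le; apply: Rinv_0_lt_compat => //.
have q4 : 0 < / 4 by apply: Rinv_0_lt_compat; lra.
have q2 : 0 < / 2 by apply: Rinv_0_lt_compat; lra.
have BA := badA hW hUW hVWU hK e1 e2.
have BC := badC hW hUW hVWU hK e3.
have chA := cherA hW hUW hVWU n bA q4 hlA.
have chB := cherB hW hUW hVWU n bB q2 hlB.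
have chC := cherC hW hUW hVWU n bC q2 hlC.
rewrite -/rA -/kA in chA; rewrite -/rB -/kB in chB; rewrite -/rC -/kC in chC.
set e := exp (- c * INR n).
have he : 0 < e := exp_pos _.
have pA : rA ^ n <= e by apply: Rle_trans (bndA n) (exp_mono_c n cA').
have pB : rB ^ n <= e by apply: Rle_trans (bndB n) (exp_mono_c n cB').
have pC : rC ^ n <= e by apply: Rle_trans (bndC n) (exp_mono_c n cC').
set e' := exp (- (g / 2) * INR n).
have he' : 0 < e' := exp_pos _.
have ee : e' <= e by exact: exp_mono_c n cg.
have iK : / K = e' ^ 2.
  rewrite /K /e' /= Rmult_1_r -exp_plus -exp_Ropp; congr exp; field.
have s2 : sqrt (2 / K) <= 2 * e'.
  rewrite -(sqrt_pow2 (2 * e')); last lra.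
  apply: sqrt_le_1_alt; rewrite /Rdiv iK; simpl; nra.
have s1 : sqrt (1 / K) <= e'.
  rewrite -(sqrt_pow2 e'); last lra.
  apply: sqrt_le_1_alt; rewrite /Rdiv iK; lra.
set SA := rsum _ in BA T; set SC := rsum _ in BC T.
apply: Rle_trans T _.
have hkAe : kA * rA ^ n <= kA * e by apply: Rmult_le_compat_l; lra.
have hkBe : kB * rB ^ n <= kB * e by apply: Rmult_le_compat_l; lra.
have hkCe : kC * rC ^ n <= kC * e by apply: Rmult_le_compat_l; lra.
have : SA <= kA * e + kB * e by lra.
have : SC <= kC * e by lra.
rewrite /C; nra.
Qed.
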